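(* Let $(\Sigma,\partial\Sigma)$ be a weighted metric graph with boundary, let $\Gamma$ be an additive subgroup of $\mathbb R$ containing the lengths of all edges of $\Sigma$, let $p,q\in\{0,1\}$, let $\omega\in\mathcal A^{p,q}(\Sigma,\partial\Sigma)$ and $x\in\Sigma$. Then there exist a neighbourhood $U\subset\Sigma$ of $x$ which is a subgraph with $\bar\Gamma$-rational vertices, a $(\mathbb Z,\Gamma)$-harmonic tropicalization $h\colon U\to\mathbb R^n$ of $(U,\partial U)$, and a smooth Lagerberg form $\eta\in\mathcal A^{p,q}(\mathbb R^n)$ such that $h^*\eta=\omega|_U$. Moreover, if $x$ is not a vertex of valency $1$ lying outside $\partial\Sigma$, then $U$ and $h$ can be chosen independently of $\omega$.
   Context: Weighted metric graph with boundary $(\Sigma,\partial\Sigma)$: finite multigraph without loop edges, oriented edges $e$ with tail $e^-$, head $e^+$, length $\ell(e)>0$, parametrization $t_e\colon[0,\ell(e)]\to e$ ($t_e(0)=e^-$, $t_{\bar e}(x)=t_e(\ell(e)-x)$), weight $w(e)=w(\bar e)\in\mathbb Z_{>0}$, boundary $\partial\Sigma\subset V(\Sigma)$; subdivisions are allowed freely. Smooth forms $\mathcal A^{p,q}(\Sigma,\partial\Sigma)$: as usual, $\mathcal A^{0,0}$ = continuous functions smooth on edges with, at interior vertices $v$: constant near $v$ if valency 1; $w(e_1)^nf^{(n)}_{e_1}(v)=(-1)^nw(e_2)^nf^{(n)}_{e_2}(v)$ for all $n$ if valency 2 (derivatives w.r.t. $t_{e_i}$); $\sum_{e^-=v}w(e)\frac{df}{dt_e}(v)=0$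 if valency $\ge3$. $\mathcal A^{1,0}$, $\mathcal A^{0,1}$: $(f_e\,d't_e)$, $(f_e\,d''t_e)$ with $f_{\bar e}=-f_e$, vanishing near interior valency-1 vertices, $(w(e_1)f_{e_1},-w(e_2)f_{e_2})$ satisfying the valency-2 condition above, $\sum_{e^-=v}w(e)f_e(v)=0$ at interior valency $\ge3$. $\mathcal A^{1,1}$: $(f_e\,d't_ed''t_e)$, $f_{\bar e}=f_e$, vanishing near interior valency-1 vertices, $(w(e_1)^2f_{e_1},w(e_2)^2f_{e_2})$ satisfying the valency-2 condition. $\bar\Gamma$ is the saturation $\{x\in\mathbb R:nx\in\Gamma\text{ for some }n\ge1\}$ if $\Gamma$ is discrete, and $\bar\Gamma=\Gamma$ otherwise; a point is $\bar\Gamma$-rational if it is $t_e(y)$ with $y\in\bar\Gamma$. A subgraph $U$ is a union of vertices and closed edges of a subdivision, with the induced weighted metric structure and boundary $\partial U=(U\cap\partial\Sigma)\cup$ (relative boundary of $U$ in $\Sigma$); $\omega|_U$ is the restriction of the edge functions. A harmonic function on $(U,\partial U)$ is a smooth function whose restriction to each edge is affine ($f\circ t_e(x)=ax+b$, slope $a$). It is $(\mathbb Z,\Gamma)$-harmonic if all slopes are integers and, for each edge $e\subset U$ contained in the edge $e'$ of $\Sigma$, the affine extension of $f|_e$ to $e'$ takes values in $\Gamma$ at the endpoints of $e'$. A $(\mathbb Z,\Gamma)$-harmonic tropicalization is $h=(h_1,\dots,h_n)$ with all $h_i$ $(\mathbb Z,\Gamma)$-harmonic. Lagerberg forms on $\mathbb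 R^n$: $\sum g_{IJ}\,d'x_I\wedge d''x_J$ with smooth $g_{IJ}$. Pullback: $h^*g=g\circ h$; $h^*\sum_ig_i\,d'x_i=(\sum_i\frac{dh_i}{dt_e}\,g_i\circ h\;d't_e)$, similarly for $d''$; $h^*\sum_{i,j}g_{ij}\,d'x_i\wedge d''x_j=(\sum_{i,j}\frac{dh_i}{dt_e}\frac{dh_j}{dt_e}\,g_{ij}\circ h\;d't_ed''t_e)$. *)

(* Defs.v *)
From Stdlib Require Import Reals List Arith ZArith.
From Coquelicot Require Import Coquelicot.
Import ListNotations.
Open Scope R_scope.

(** * Weighted metric graphs with boundary
   Vertices are 0..g_nV-1, edges are 0..g_nE-1; each edge e is stored with a
   fixed orientation e^- = g_src e, e^+ = g_tgt e; the reversed edge is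
   handled explicitly.  t_e(y), y in [0, g_len e], is the point of e. *)
Record wgraph := {
  g_nV : nat; g_nE : nat;
  g_src : nat -> nat; g_tgt : nat -> nat;
  g_len : nat -> R; g_wt : nat -> nat;
  g_bnd : nat -> Prop }.

Definition wf_graph (G : wgraph) : Prop :=
  forall e, (e < g_nE G)%nat ->
    (g_src G e < g_nV G)%nat /\ (g_tgt G e < g_nV G)%nat /\
    g_src G e <> g_tgt G e /\ 0 < g_len G e /\ (0 < g_wt G e)%nat.

Inductive point := PV (v : nat) | PE (e : nat) (y : R).

Definition valid_pt (G : wgraph) (P : point) : Prop :=
  match P with
  | PV v => (v < g_nV G)%nat
  | PE e y => (e < g_nE G)%nat /\ 0 < y < g_len G e
  end.

Definition tpt (G : wgraph) (e : nat) (y : R) : point :=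
  if Req_EM_T y 0 then PV (g_src G e)
  else if Req_EM_T y (g_len G e) then PV (g_tgt G e) else PE e y.

Definition near (G : wgraph) (P : point) (e : nat) (y eps : R) : Prop :=
  match P with
  | PV v => (g_src G e = v /\ y < eps) \/ (g_tgt G e = v /\ g_len G e - y < eps)
  | PE e0 x => e = e0 /\ Rabs (y - x) < eps
  end.

Definition nbhd (G : wgraph) (S : point -> Prop) (P : point) : Prop :=
  S P /\ exists eps, 0 < eps /\
    forall e y, (e < g_nE G)%nat -> 0 <= y <= g_len G e ->
      near G P e y eps -> S (tpt G e y).

(** incident edges and valency (no loops, so each incident edge counts once) *)
Definition incident (G : wgraph) (v : nat) : list nat :=
  filter (fun e => orb (Nat.eqb (g_src G e) v) (Nat.eqb (g_tgt G e) v))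
         (seq 0 (g_nE G)).

Definition valency (G : wgraph) (v : nat) : nat := length (incident G v).

Definition Rsum (l : list R) : R := fold_right Rplus 0 l.

(** * Smooth forms on (G, bnd G)
   A form of bidegree (p,q) (p,q booleans = 0/1) is given by edge functions
   f e : R -> R, where f e y is the coefficient at t_e(y) w.r.t. d't_e, d''t_e
   for the stored orientation of e.  Each f e is required to be C^oo on R
   (only its values on [0, g_len e] matter: a smooth function on the closed
   edge, together with a smooth extension). *)
Definition smooth_fun (f : R -> R) : Prop := forall n x, ex_derive_n f n x.

Definition rev_sign (p q : bool) : R := if xorb p q then -1 else 1.

(** coefficient on e oriented outward at v (e^- = v), as a function of the
    parameter of the outward orientation *)
Definition outf (G : wgraph) (p q : bool) (f : nat -> R -> R) (v e : nat)
  : R -> R :=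
  if Nat.eqb (g_src G e) v then f e
  else fun y => rev_sign p q * f e (g_len G e - y).

Definition val2_cond (w1 w2 : R) (F1 F2 : R -> R) : Prop :=
  forall n : nat,
    w1 ^ n * Derive_n F1 n 0 = (-1) ^ n * w2 ^ n * Derive_n F2 n 0.

Definition is_form (G : wgraph) (p q : bool) (f : nat -> R -> R) : Prop :=
  (forall e, (e < g_nE G)%nat -> smooth_fun (f e)) /\
  forall v, (v < g_nV G)%nat ->
    let o := outf G p q f v in
    let w e := INR (g_wt G e) in
    (* continuity, for functions *)
    (andb (negb p) (negb q) = true ->
       forall e1 e2, In e1 (incident G v) -> In e2 (incident G v) ->
         o e1 0 = o e2 0) /\
    (~ g_bnd G v ->
      (valency G v = 1%nat ->
         forall e, In e (incident G v) ->
           exists eps, 0 < eps /\ forall y, 0 <= y <= eps ->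
             o e y = (if orb p q then 0 else o e 0)) /\
      (valency G v = 2%nat ->
         forall e1 e2, In e1 (incident G v) -> In e2 (incident G v) ->
           e1 <> e2 ->
           match p, q with
           | false, false => val2_cond (w e1) (w e2) (o e1) (o e2)
           | true, true =>
               val2_cond (w e1) (w e2) (fun y => w e1 ^ 2 * o e1 y)
                                       (fun y => w e2 ^ 2 * o e2 y)
           | _, _ =>
               val2_cond (w e1) (w e2) (fun y => w e1 * o e1 y)
                                       (fun y => - (w e2 * o e2 y))
           end) /\
      ((3 <= valency G v)%nat ->
           match p, q with
           | false, false =>
               Rsum (map (fun e => w e * Derive (o e) 0) (incident G v)) = 0
           | true, true => True
           | _, _ => Rsum (map (fun e => w e * o e 0) (incident G v)) = 0
           end)).

Definition subgroup (Gam : R -> Prop) : Prop :=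
  Gam 0 /\ forall a b, Gam a -> Gam b -> Gam (a - b).

Definition discrete (Gam : R -> Prop) : Prop :=
  exists eps, 0 < eps /\ forall g, Gam g -> g <> 0 -> eps <= Rabs g.

Definition Gbar (Gam : R -> Prop) (y : R) : Prop :=
  (discrete Gam /\ exists n : nat, (1 <= n)%nat /\ Gam (INR n * y)) \/
  (~ discrete Gam /\ Gam y).

Definition rational_pt (G : wgraph) (Gam : R -> Prop) (P : point) : Prop :=
  (exists v, P = PV v) \/
  exists e y, (e < g_nE G)%nat /\ 0 <= y <= g_len G e /\ Gbar Gam y /\
              P = tpt G e y.

(** * Subgraphs (of a subdivision)
   A subgraph U is a weighted metric graph [sg] with: each vertex u mapped to
   a point [vpt u] of G; each edge e' of U being the segment
   t_{par e'}([off e', off e' + len e']) of the edge par e' of G, oriented as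
   par e' and with t_{e'}(y) = t_{par e'}(off e' + y). *)
Record subgraph := {
  sg : wgraph;
  sg_par : nat -> nat;
  sg_off : nat -> R;
  sg_vpt : nat -> point }.

Definition in_sub (G : wgraph) (U : subgraph) (P : point) : Prop :=
  (exists u, (u < g_nV (sg U))%nat /\ sg_vpt U u = P) \/
  (exists e y, (e < g_nE (sg U))%nat /\ 0 <= y <= g_len (sg U) e /\
               P = tpt G (sg_par U e) (sg_off U e + y)).

Definition sub_bnd (G : wgraph) (U : subgraph) (u : nat) : Prop :=
  (exists v, sg_vpt U u = PV v /\ g_bnd G v) \/
  ~ nbhd G (in_sub G U) (sg_vpt U u).

Definition is_subgraph (G : wgraph) (U : subgraph) : Prop :=
  let H := sg U in
  wf_graph H /\
  (forall u, (u < g_nV H)%nat -> valid_pt G (sg_vpt U u)) /\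
  (forall u1 u2, (u1 < g_nV H)%nat -> (u2 < g_nV H)%nat ->
     sg_vpt U u1 = sg_vpt U u2 -> u1 = u2) /\
  (forall e, (e < g_nE H)%nat ->
     (sg_par U e < g_nE G)%nat /\ 0 <= sg_off U e /\
     sg_off U e + g_len H e <= g_len G (sg_par U e) /\
     g_wt H e = g_wt G (sg_par U e) /\
     sg_vpt U (g_src H e) = tpt G (sg_par U e) (sg_off U e) /\
     sg_vpt U (g_tgt H e) = tpt G (sg_par U e) (sg_off U e + g_len H e)) /\
  (forall e1 e2, (e1 < g_nE H)%nat -> (e2 < g_nE H)%nat -> e1 <> e2 ->
     sg_par U e1 = sg_par U e2 ->
     sg_off U e1 + g_len H e1 <= sg_off U e2 \/
     sg_off U e2 + g_len H e2 <= sg_off U e1) /\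
  (forall u e, (u < g_nV H)%nat -> (e < g_nE H)%nat ->
     forall y, 0 < y < g_len H e ->
       sg_vpt U u <> tpt G (sg_par U e) (sg_off U e + y)) /\
  (forall u, (u < g_nV H)%nat -> (g_bnd H u <-> sub_bnd G U u)).

(** * (Z,Gamma)-harmonic tropicalizations of (U, bnd U)
   h i e y = value of the i-th component on t_e(y), e an edge of U. *)
Definition harmonic (H : wgraph) (f : nat -> R -> R) : Prop :=
  is_form H false false f /\
  forall e, (e < g_nE H)%nat ->
    exists s c, forall y, 0 <= y <= g_len H e -> f e y = s * y + c.

Definition ZGam_harmonic (G : wgraph) (Gam : R -> Prop) (U : subgraph)
  (f : nat -> R -> R) : Prop :=
  harmonic (sg U) f /\
  forall e, (e < g_nE (sg U))%nat ->
    exists (s : Z) (c : R),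
      (forall y, 0 <= y <= g_len (sg U) e -> f e y = IZR s * y + c) /\
      (* affine extension to the edge sg_par e of G, at its endpoints *)
      Gam (c - IZR s * sg_off U e) /\
      Gam (c + IZR s * (g_len G (sg_par U e) - sg_off U e)).

Definition ZGam_trop (G : wgraph) (Gam : R -> Prop) (U : subgraph)
  (n : nat) (h : nat -> nat -> R -> R) : Prop :=
  forall i, (i < n)%nat -> ZGam_harmonic G Gam U (h i).

(** * Lagerberg forms on R^n
   Points of R^n are functions nat -> R, only coordinates < n mattering. *)
Definition upd (x : nat -> R) (i : nat) (t : R) : nat -> R :=
  fun k => if Nat.eqb k i then t else x k.

Definition partial (i : nat) (F : (nat -> R) -> R) : (nat -> R) -> R :=
  fun x => Derive (fun t => F (upd x i t)) (x i).

Definition iter_partial (l : list nat) (F : (nat -> R) -> R) :=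
  fold_right partial F l.

Definition cont_Rn (n : nat) (F : (nat -> R) -> R) : Prop :=
  forall x eps, 0 < eps -> exists delta, 0 < delta /\
    forall y, (forall i, (i < n)%nat -> Rabs (y i - x i) < delta) ->
      Rabs (F y - F x) < eps.

Definition smooth_Rn (n : nat) (F : (nat -> R) -> R) : Prop :=
  (forall x y, (forall i, (i < n)%nat -> x i = y i) -> F x = F y) /\
  forall l, List.Forall (fun i => (i < n)%nat) l ->
    cont_Rn n (iter_partial l F) /\
    forall i x, (i < n)%nat ->
      ex_derive (fun t => iter_partial l F (upd x i t)) (x i).

(** indices: for degree 0 only the dummy index 0, for degree 1 i < n *)
Definition idx (b : bool) (n : nat) : list nat := if b then seq 0 n else [0%nat].

(** eta = sum_{I,J} g I J d'x_I /\ d''x_J, coefficient g i j *)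
Definition lagerberg (n : nat) (p q : bool)
  (g : nat -> nat -> (nat -> R) -> R) : Prop :=
  forall i j, In i (idx p n) -> In j (idx q n) -> smooth_Rn n (g i j).

Definition pullback (n : nat) (p q : bool) (g : nat -> nat -> (nat -> R) -> R)
  (h : nat -> nat -> R -> R) (e : nat) (y : R) : R :=
  Rsum (map (fun i => Rsum (map (fun j =>
     (if p then Derive (h i e) y else 1) *
     (if q then Derive (h j e) y else 1) *
     g i j (fun k => h k e y)) (idx q n))) (idx p n)).

Definition pullback_eq (G : wgraph) (U : subgraph) (n : nat) (p q : bool)
  (g : nat -> nat -> (nat -> R) -> R) (h : nat -> nat -> R -> R)
  (omega : nat -> R -> R) : Prop :=
  forall e y, (e < g_nE (sg U))%nat -> 0 <= y <= g_len (sg U) e ->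
    pullback n p q g h e y = omega (sg_par U e) (sg_off U e + y).

Definition good_chart (G : wgraph) (Gam : R -> Prop) (x : point)
  (U : subgraph) (n : nat) (h : nat -> nat -> R -> R) : Prop :=
  is_subgraph G U /\ nbhd G (in_sub G U) x /\
  (forall u, (u < g_nV (sg U))%nat -> rational_pt G Gam (sg_vpt U u)) /\
  ZGam_trop G Gam U n h.

Definition interior_leaf (G : wgraph) (x : point) : Prop :=
  exists v, x = PV v /\ ~ g_bnd G v /\ valency G v = 1%nat.

(* Main.v *)
Require Import Defs.
From Stdlib Require Import Reals List Arith ZArith Lia Lra.
From Coquelicot Require Import Coquelicot.
From Stdlib Require Import Classical FunctionalExtensionality ClassicalEpsilon.
Import ListNotations.
Open Scope R_scope.


Lemma is_derive_cst (c x : R) : is_derive (fun _ => c) x 0.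
Proof. exact (is_derive_const c x). Qed.
Lemma is_derive_lin (a b x : R) : is_derive (fun x => a * x + b) x a.
Proof. auto_derive; [trivial| ring]. Qed.

Definition chain (F : nat -> R -> R) := forall n x, is_derive (F n) x (F (S n) x).

Lemma chain_Derive_n F : chain F -> forall n x, Derive_n (F 0%nat) n x = F n x.
Proof.
  intros H n; induction n; intros x; simpl. reflexivity.
  rewrite (Derive_ext _ (F n)) by exact IHn. apply is_derive_unique, H.
Qed.

Lemma chain_smooth F : chain F -> smooth_fun (F 0%nat).
Proof.
  intros H n x; destruct n; simpl; [trivial|].
  apply ex_derive_ext with (F n). intros t; symmetry; apply chain_Derive_n, H.
  eexists; apply H.
Qed.

Lemma smooth_chain f : smooth_fun f -> chain (fun n => Derive_n f n).
Proof.
  intros H n x. specialize (H (S n) x). simpl in H. simpl.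
  apply Derive_correct; exact H.
Qed.

Lemma smooth_ext f g : (forall x, f x = g x) -> smooth_fun f -> smooth_fun g.
Proof. intros E H n x. apply ex_derive_n_ext with f; auto. Qed.

Lemma smooth_chain_ex f : smooth_fun f -> exists F, chain F /\ forall x, F 0%nat x = f x.
Proof. intros H; exists (fun n => Derive_n f n); split; [apply smooth_chain; auto| reflexivity]. Qed.

Lemma smooth_of_chain F f : chain F -> (forall x, F 0%nat x = f x) -> smooth_fun f.
Proof. intros H E; apply smooth_ext with (F 0%nat); auto; apply chain_smooth; auto. Qed.

Definition cchain (c : R) : nat -> R -> R := fun n => match n with O => fun _ => c | _ => fun _ => 0 end.
Lemma chain_const c : chain (cchain c).
Proof. intros n x; destruct n; simpl; apply is_derive_cst. Qed.
Lemma smooth_const c : smooth_fun (fun _ => c).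
Proof. apply (smooth_of_chain (cchain c)); [apply chain_const| reflexivity]. Qed.

Lemma smooth_plus f g : smooth_fun f -> smooth_fun g -> smooth_fun (fun x => f x + g x).
Proof.
  intros Hf Hg. destruct (smooth_chain_ex f Hf) as [F [HF EF]].
  destruct (smooth_chain_ex g Hg) as [G [HG EG]].
  apply (smooth_of_chain (fun n x => F n x + G n x)).
  - intros n x. apply (is_derive_plus (F n) (G n)); auto.
  - intros x; rewrite EF, EG; auto.
Qed.

Lemma smooth_scal c f : smooth_fun f -> smooth_fun (fun x => c * f x).
Proof.
  intros Hf. destruct (smooth_chain_ex f Hf) as [F [HF EF]].
  apply (smooth_of_chain (fun n x => c * F n x)).
  - intros n x. apply (is_derive_scal (F n)); auto.
  - intros x; rewrite EF; auto.
Qed.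

Lemma smooth_opp f : smooth_fun f -> smooth_fun (fun x => - f x).
Proof. intros H; apply smooth_ext with (fun x => -1 * f x); [intros; ring|apply smooth_scal; auto]. Qed.

Lemma smooth_minus f g : smooth_fun f -> smooth_fun g -> smooth_fun (fun x => f x - g x).
Proof. intros; apply smooth_plus; auto; apply smooth_opp; auto. Qed.

Definition affchain (F : nat -> R -> R) (a b : R) : nat -> R -> R :=
  fun n x => a ^ n * F n (a * x + b).

Lemma chain_aff F a b : chain F -> chain (affchain F a b).
Proof.
  intros H n x. unfold affchain. simpl pow.
  replace (a * a ^ n * F (S n) (a * x + b)) with (a ^ n * (a * F (S n) (a * x + b))) by ring.
  apply (is_derive_scal (fun x => F n (a * x + b))).
  apply (is_derive_comp (F n) (fun x => a * x + b)). apply H.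
  evar_last. apply is_derive_lin. simpl. unfold scal; simpl; unfold mult; simpl. ring.
Qed.

Lemma smooth_aff f a b : smooth_fun f -> smooth_fun (fun x => f (a * x + b)).
Proof.
  intros Hf. destruct (smooth_chain_ex f Hf) as [F [HF EF]].
  apply (smooth_of_chain (affchain F a b)). apply chain_aff; auto.
  intros x; unfold affchain; simpl; rewrite EF; ring.
Qed.

Lemma Derive_n_aff f c a b n x : smooth_fun f ->
  Derive_n (fun u => c * f (a * u + b)) n x = c * a ^ n * Derive_n f n (a * x + b).
Proof.
  intros Hf. pose proof (chain_aff _ a b (smooth_chain f Hf)) as H.
  pose proof (smooth_chain_ex _ Hf).
  assert (chain (fun n x => c * affchain (fun n => Derive_n f n) a b n x)) as H2.
  { intros m y. apply (is_derive_scal (affchain _ a b m)). apply H. }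
  transitivity (c * affchain (fun n => Derive_n f n) a b n x).
  rewrite <- (chain_Derive_n _ H2). unfold affchain.
  apply Derive_n_ext. intros t; simpl; ring.
  unfold affchain; ring.
Qed.

Lemma smooth_lin a b : smooth_fun (fun x => a * x + b).
Proof.
  apply (smooth_of_chain (fun n => match n with O => fun x => a * x + b | 1%nat => fun _ => a | _ => fun _ => 0 end)).
  - intros [|[|n]] x; simpl.
    + apply is_derive_lin.
    + apply is_derive_cst.
    + apply is_derive_cst.
  - reflexivity.
Qed.

Lemma Derive_n_lin a b n x : Derive_n (fun x => a * x + b) (S (S n)) x = 0.
Proof.
  set (F := fun n => match n with O => fun x => a * x + b | 1%nat => fun _ => a | _ => fun _ => 0 end).
  assert (chain F).
  { intros [|[|m]] y; simpl.
    + apply is_derive_lin.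
    + apply is_derive_cst.
    + apply is_derive_cst. }
  pose proof (chain_Derive_n F H (S (S n)) x) as E. simpl in E |- *. exact E.
Qed.

Lemma Derive_n_lin1 a b x : Derive_n (fun x => a * x + b) 1 x = a.
Proof.
  simpl. apply is_derive_unique. apply is_derive_lin.
Qed.

Lemma smooth_Derive f : smooth_fun f -> smooth_fun (Derive f).
Proof.
  intros Hf. pose proof (smooth_chain f Hf) as H.
  apply (smooth_of_chain (fun n => Derive_n f (S n))).
  intros n x; apply H. intros x; simpl. apply Derive_ext; reflexivity.
Qed.

Lemma smooth_derive f x : smooth_fun f -> is_derive f x (Derive f x).
Proof. intros H; apply Derive_correct. exact (H 1%nat x). Qed.

Lemma smooth_continuous f x : smooth_fun f -> continuous f x.
Proof. intros H; apply (ex_derive_continuous (K:=R_AbsRing) (V:=R_NormedModule)). exact (H 1%nat x). Qed.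

Lemma smooth_continuity_pt f x : smooth_fun f -> continuity_pt f x.
Proof. intros H; apply continuity_pt_filterlim, smooth_continuous, H. Qed.

Definition glue0 (D : R -> R) (u : R) : R := if Rlt_dec u 0 then D u else 0.

Lemma smooth_flat_glue D : smooth_fun D -> (forall n, Derive_n D n 0 = 0) ->
  smooth_fun (glue0 D).
Proof.
  intros HD Hf. pose proof (smooth_chain D HD) as HC.
  apply (smooth_of_chain (fun n => glue0 (Derive_n D n))); [| intros; reflexivity].
  intros n x. unfold glue0 at 2.
  destruct (Rlt_dec x 0) as [Hx|Hx].
  - apply is_derive_ext_loc with (Derive_n D n); [|apply HC].
    apply filter_imp with (fun u => u < 0). intros t Ht; unfold glue0; destruct (Rlt_dec t 0); tauto.
    apply (open_lt 0 x Hx).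
  - destruct (Rle_lt_or_eq_dec 0 x (Rnot_lt_le _ _ Hx)) as [Hx'|Hx'].
    + apply is_derive_ext_loc with (fun _ => 0); [|apply is_derive_cst].
      apply filter_imp with (fun u => 0 < u). intros t Ht; unfold glue0; destruct (Rlt_dec t 0); [lra|auto].
      apply (open_gt 0 x Hx').
    + subst x. apply is_derive_Reals. intros eps Heps.
      pose proof (HC n 0) as H0. apply is_derive_Reals in H0. rewrite Hf in H0.
      destruct (H0 eps Heps) as [del Hdel]. exists del. intros h Hh Hhd.
      specialize (Hdel h Hh Hhd). unfold glue0. rewrite Rplus_0_l in *.
      destruct (Rlt_dec 0 0); [lra|].
      destruct (Rlt_dec h 0).
      * rewrite Hf in Hdel. exact Hdel.
      * replace ((0 - 0) / h - 0) with 0 by (field; lra). rewrite Rabs_R0; auto.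
Qed.

Definition divint (r : R -> R) (m : nat) (t : R) : R :=
  RInt (fun s => s ^ m * Derive_n r (S m) (s * t)) 0 1.

Lemma ex_derive_pm r m s x : smooth_fun r ->
  is_derive (fun u => s ^ m * Derive_n r (S m) (s * u)) x (s ^ S m * Derive_n r (S (S m)) (s * x)).
Proof.
  intros Hr. pose proof (smooth_chain r Hr) as HC.
  evar_last. apply (is_derive_scal (fun u => Derive_n r (S m) (s * u))).
  apply (is_derive_comp (Derive_n r (S m)) (fun u => s * u)). apply HC.
  evar_last. apply is_derive_scal, is_derive_id. reflexivity.
  simpl. unfold scal; simpl; unfold mult, one; simpl. ring.
Qed.

Lemma cont_pm r m y x : smooth_fun r -> continuous (fun s => s ^ m * Derive_n r (S m) (s * y)) x.
Proof.
  intros Hr. pose proof (smooth_chain r Hr) as HC.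
  apply (ex_derive_continuous (K:=R_AbsRing) (V:=R_NormedModule)).
  apply ex_derive_mult. apply ex_derive_pow, ex_derive_id.
  apply (ex_derive_comp (Derive_n r (S m)) (fun s => s * y)). eexists; apply HC.
  apply ex_derive_mult. apply ex_derive_id. apply ex_derive_const.
Qed.

Lemma chain_divint r : smooth_fun r -> chain (divint r).
Proof.
  intros Hr m t. pose proof (smooth_chain r Hr) as HC. unfold divint.
  evar_last.
  apply (is_derive_RInt_param (fun u s => s ^ m * Derive_n r (S m) (s * u)) 0 1 t).
  - apply filter_forall. intros x s _. eexists. apply ex_derive_pm; auto.
  - intros s _. 
    apply continuity_2d_pt_ext with (fun u v => v ^ S m * Derive_n r (S (S m)) (v * u)).
    { intros u v. symmetry. apply is_derive_unique, ex_derive_pm; auto. }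
    apply continuity_2d_pt_mult.
    + apply (continuity_1d_2d_pt_comp (fun v => v ^ S m) (fun _ v => v)).
      apply derivable_continuous_pt, derivable_pt_pow. apply continuity_2d_pt_id2.
    + apply (continuity_1d_2d_pt_comp (Derive_n r (S (S m))) (fun u v => v * u)).
      apply smooth_continuity_pt.
      apply smooth_ext with (fun x => Derive_n r (S (S m) + 0)%nat x); [intros; rewrite Nat.add_0_r; reflexivity|].
      apply (chain_smooth (fun n => Derive_n r (S (S m) + n)%nat)).
      intros n x. replace (S (S m) + S n)%nat with (S (S (S m) + n)%nat) by lia. apply HC.
      apply continuity_2d_pt_mult. apply continuity_2d_pt_id2. apply continuity_2d_pt_id1.
  - apply filter_forall. intros y. apply (ex_RInt_continuous (V:=R_CompleteNormedModule)). intros z _. apply cont_pm; auto.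
  - apply RInt_ext. intros s _. apply is_derive_unique, ex_derive_pm; auto.
Qed.

Lemma division r : smooth_fun r -> r 0 = 0 ->
  exists rho, smooth_fun rho /\ (forall t, t * rho t = r t) /\ rho 0 = Derive r 0.
Proof.
  intros Hr H0. exists (divint r 0). split; [apply (chain_smooth (divint r)), chain_divint; auto|split].
  - intros t. destruct (Req_dec t 0) as [Ht|Ht].
    + subst; rewrite H0; ring.
    + unfold divint.
      assert (Hex : ex_RInt (V:=R_CompleteNormedModule) (Derive r) (t * 0 + 0) (t * 1 + 0)).
      { apply (ex_RInt_continuous (V:=R_CompleteNormedModule)).
        intros z _. apply smooth_continuous, smooth_Derive, Hr. }
      pose proof (RInt_comp_lin (V:=R_CompleteNormedModule) (Derive r) t 0 0 1 Hex) as E1.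
      assert (Hex2 : ex_RInt (V:=R_CompleteNormedModule) (fun y => Derive r (t * y + 0)) 0 1).
      { apply (ex_RInt_continuous (V:=R_CompleteNormedModule)). intros z _.
          apply (continuous_comp (fun y => t * y + 0) (Derive r)).
          apply (ex_derive_continuous (K:=R_AbsRing) (V:=R_NormedModule)). eexists; apply is_derive_lin.
          apply smooth_continuous, smooth_Derive, Hr. }
      pose proof (RInt_scal (V:=R_CompleteNormedModule) _ 0 1 t Hex2) as E2.
      rewrite E2 in E1. clear E2.
      replace (t * 0 + 0) with 0 in E1 by ring. replace (t * 1 + 0) with t in E1 by ring.
      assert (E3 : RInt (V:=R_CompleteNormedModule) (Derive r) 0 t = r t - r 0).
      { apply RInt_Derive. intros; exact (Hr 1%nat x). intros; apply smooth_continuous, smooth_Derive, Hr. }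
      rewrite E3, H0, Rminus_0_r in E1. rewrite <- E1. unfold scal; simpl; unfold mult; simpl.
      apply f_equal.
      apply (RInt_ext (V:=R_CompleteNormedModule)). intros s _. simpl.
      replace (t * s + 0) with (s * t) by ring. rewrite Rmult_1_l; reflexivity.
  - unfold divint. rewrite (RInt_ext (V:=R_CompleteNormedModule) _ (fun _ => Derive r 0)).
    rewrite RInt_const. unfold scal; simpl; unfold mult; simpl. ring.
    intros s _. simpl. rewrite Rmult_0_r, Rmult_1_l. reflexivity.
Qed.


Fixpoint tprod (T : nat -> R -> R) (n : nat) (x : nat -> R) : R :=
  match n with O => 1 | S n => tprod T n x * T n (x n) end.
Definition TPF (n : nat) (c : R) (Ts : list (nat -> R -> R)) (x : nat -> R) : R :=
  c + Rsum (map (fun T => tprod T n x) Ts).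
Definition dT (i : nat) (T : nat -> R -> R) : nat -> R -> R :=
  fun m => if Nat.eqb m i then Derive (T m) else T m.
Definition TPok (n : nat) (Ts : list (nat -> R -> R)) : Prop :=
  List.Forall (fun T => forall m, (m < n)%nat -> smooth_fun (T m)) Ts.

Lemma tprod_ext T n x y : (forall m, (m < n)%nat -> x m = y m) -> tprod T n x = tprod T n y.
Proof. induction n; simpl; intros H; auto. rewrite IHn by (intros; apply H; lia). rewrite H by lia. auto. Qed.

Lemma TPF_ext n c Ts x y : (forall m, (m < n)%nat -> x m = y m) -> TPF n c Ts x = TPF n c Ts y.
Proof. intros H. unfold TPF. f_equal. induction Ts; simpl; auto. rewrite IHTs, (tprod_ext _ _ _ _ H); auto. Qed.

Lemma tprod_upd_ge T n x i t : (n <= i)%nat -> tprod T n (upd x i t) = tprod T n x.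
Proof. intros H; apply tprod_ext. intros m Hm; unfold upd. destruct (Nat.eqb_spec m i); [lia|auto]. Qed.

Lemma tprod_dT_ge T n x i : (n <= i)%nat -> tprod (dT i T) n x = tprod T n x.
Proof. induction n; simpl; intros H; auto. rewrite IHn by lia. unfold dT. destruct (Nat.eqb_spec n i); [lia|auto]. Qed.

Lemma is_derive_tprod T n x i t : (i < n)%nat -> (forall m, (m < n)%nat -> smooth_fun (T m)) ->
  is_derive (fun t => tprod T n (upd x i t)) t (tprod (dT i T) n (upd x i t)).
Proof.
  revert t. induction n; intros t Hi HT; [lia|]. simpl.
  destruct (Nat.eq_dec i n) as [->|Hn].
  - apply is_derive_ext with (fun t => tprod T n x * T n t).
    { intros u. rewrite tprod_upd_ge by lia. unfold upd. rewrite Nat.eqb_refl. auto. }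
    replace (tprod (dT n T) n (upd x n t) * dT n T n (upd x n t n)) with (tprod T n x * Derive (T n) t).
    apply (is_derive_scal (T n)). apply smooth_derive, HT; lia.
    rewrite tprod_dT_ge by lia. rewrite tprod_upd_ge by lia. unfold dT, upd. rewrite !Nat.eqb_refl. auto.
  - assert (E : forall u, upd x i u n = x n) by (intros; unfold upd; destruct (Nat.eqb_spec n i); [lia|auto]).
    rewrite E. unfold dT at 2. destruct (Nat.eqb_spec n i); [lia|].
    apply is_derive_ext with (fun t => T n (x n) * tprod T n (upd x i t)).
    { intros u. simpl. rewrite E. apply Rmult_comm. }
    rewrite Rmult_comm.
    apply (is_derive_scal (fun t => tprod T n (upd x i t))). apply IHn. lia. intros; apply HT; lia.
Qed.

Lemma is_derive_Rsum_tprod n Ts x i t : (i < n)%nat -> TPok n Ts ->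
  is_derive (fun t => Rsum (map (fun T => tprod T n (upd x i t)) Ts)) t
     (Rsum (map (fun T => tprod T n (upd x i t)) (map (dT i) Ts))).
Proof.
  intros Hi HT. induction Ts; simpl.
  - apply is_derive_cst.
  - inversion HT; subst. evar_last.
    apply (is_derive_plus (fun t => tprod a n (upd x i t)) (fun t => Rsum (map (fun T => tprod T n (upd x i t)) Ts))).
    apply is_derive_tprod; auto. apply IHTs; auto. reflexivity.
Qed.

Lemma is_derive_TPF n c Ts x i t : (i < n)%nat -> TPok n Ts ->
  is_derive (fun t => TPF n c Ts (upd x i t)) t (TPF n 0 (map (dT i) Ts) (upd x i t)).
Proof.
  intros Hi HT. unfold TPF. evar_last.
  apply (is_derive_plus (fun _ => c) (fun t => Rsum (map (fun T => tprod T n (upd x i t)) Ts))).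
  apply is_derive_cst. apply is_derive_Rsum_tprod; auto.
  simpl. unfold plus; simpl. ring.
Qed.

Lemma TPok_dT n i Ts : TPok n Ts -> TPok n (map (dT i) Ts).
Proof.
  intros H. induction H; simpl; constructor; auto.
  intros m Hm. unfold dT. destruct (Nat.eqb m i); [apply smooth_Derive|]; auto.
Qed.

Lemma upd_same x i : upd x i (x i) = x.
Proof. apply functional_extensionality; intros k; unfold upd. destruct (Nat.eqb_spec k i); subst; auto. Qed.

Lemma partial_TPF n c Ts i : (i < n)%nat -> TPok n Ts ->
  partial i (TPF n c Ts) = TPF n 0 (map (dT i) Ts).
Proof.
  intros Hi HT. apply functional_extensionality; intros x. unfold partial.
  transitivity (TPF n 0 (map (dT i) Ts) (upd x i (x i))).
  apply is_derive_unique, is_derive_TPF; auto. rewrite upd_same; auto.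
Qed.

Lemma iter_partial_TPF n c Ts l : TPok n Ts -> List.Forall (fun i => (i < n)%nat) l ->
  exists c' Ts', TPok n Ts' /\ iter_partial l (TPF n c Ts) = TPF n c' Ts'.
Proof.
  intros HT Hl. induction Hl.
  - exists c, Ts; split; auto.
  - destruct IHHl as [c' [Ts' [H1 H2]]]. simpl. rewrite H2.
    exists 0, (map (dT x) Ts'). split. apply TPok_dT; auto. apply partial_TPF; auto.
Qed.

Lemma cont_const n c : cont_Rn n (fun _ => c).
Proof. intros x eps He. exists 1; split; [lra|]. intros; rewrite Rminus_eq_0, Rabs_R0; auto. Qed.

Lemma cont_plus n F G : cont_Rn n F -> cont_Rn n G -> cont_Rn n (fun x => F x + G x).
Proof.
  intros HF HG x eps He.
  destruct (HF x (eps/2)) as [d1 [Hd1 H1]]; [lra|].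
  destruct (HG x (eps/2)) as [d2 [Hd2 H2]]; [lra|].
  exists (Rmin d1 d2); split. apply Rmin_pos; auto.
  intros y Hy.
  assert (A1 := H1 y (fun i Hi => Rlt_le_trans _ _ _ (Hy i Hi) (Rmin_l _ _))).
  assert (A2 := H2 y (fun i Hi => Rlt_le_trans _ _ _ (Hy i Hi) (Rmin_r _ _))).
  replace (F y + G y - (F x + G x)) with ((F y - F x) + (G y - G x)) by ring.
  eapply Rle_lt_trans. apply Rabs_triang. lra.
Qed.

Lemma cont_mult n F G : cont_Rn n F -> cont_Rn n G -> cont_Rn n (fun x => F x * G x).
Proof.
  intros HF HG x eps He.
  set (A := F x). set (B := G x).
  assert (HA : 0 < Rabs A + 1) by (pose proof (Rabs_pos A); lra).
  assert (HB : 0 < Rabs B + 1) by (pose proof (Rabs_pos B); lra).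
  destruct (HF x (eps / 2 / (Rabs B + 1))) as [d1 [Hd1 H1]].
  { apply Rdiv_lt_0_compat; lra. }
  destruct (HG x (Rmin 1 (eps / 2 / (Rabs A + 1)))) as [d2 [Hd2 H2]].
  { apply Rmin_pos; [lra|apply Rdiv_lt_0_compat; lra]. }
  exists (Rmin d1 d2); split. apply Rmin_pos; auto.
  intros y Hy.
  assert (A1 := H1 y (fun i Hi => Rlt_le_trans _ _ _ (Hy i Hi) (Rmin_l _ _))).
  assert (A2 := H2 y (fun i Hi => Rlt_le_trans _ _ _ (Hy i Hi) (Rmin_r _ _))).
  fold A B in A1, A2 |- *.
  replace (F y * G y - A * B) with ((F y - A) * G y + A * (G y - B)) by ring.
  eapply Rle_lt_trans. apply Rabs_triang. rewrite !Rabs_mult.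
  assert (G1 : Rabs (G y) <= Rabs B + 1).
  { assert (Rabs (G y - B) < 1) by (eapply Rlt_le_trans; [exact A2| apply Rmin_l]).
    replace (G y) with ((G y - B) + B) by ring. eapply Rle_trans. apply Rabs_triang. lra. }
  assert (T1 : Rabs (F y - A) * Rabs (G y) <= eps / 2).
  { apply Rle_trans with (eps / 2 / (Rabs B + 1) * (Rabs B + 1)).
    apply Rmult_le_compat; try apply Rabs_pos; lra.
    right; field; lra. }
  assert (T2 : Rabs A * Rabs (G y - B) < eps / 2).
  { apply Rle_lt_trans with (Rabs A * (eps / 2 / (Rabs A + 1))).
    apply Rmult_le_compat_l. apply Rabs_pos. left; eapply Rlt_le_trans; [exact A2|apply Rmin_r].
    apply Rlt_le_trans with ((Rabs A + 1) * (eps / 2 / (Rabs A + 1))).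
    apply Rmult_lt_compat_r. apply Rdiv_lt_0_compat; lra. lra.
    right; field; lra. }
  lra.
Qed.

Lemma cont_coord n m phi : (m < n)%nat -> (forall t, continuity_pt phi t) -> cont_Rn n (fun x => phi (x m)).
Proof.
  intros Hm Hphi x eps He. destruct (Hphi (x m) eps He) as [d [Hd H]].
  exists d; split; auto. intros y Hy.
  destruct (Req_dec (y m) (x m)) as [E|E]. rewrite E, Rminus_eq_0, Rabs_R0; auto.
  apply H. split. split; [exact I| auto]. simpl; unfold R_dist; auto.
Qed.

Lemma cont_tprod N T n : (n <= N)%nat -> (forall m, (m < n)%nat -> smooth_fun (T m)) -> cont_Rn N (tprod T n).
Proof.
  induction n; intros Hn HT; simpl. apply cont_const.
  apply cont_mult. apply IHn; [lia| intros; apply HT; lia].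
  apply cont_coord. lia. intros; apply smooth_continuity_pt, HT; lia.
Qed.

Lemma cont_TPF n c Ts : TPok n Ts -> cont_Rn n (TPF n c Ts).
Proof.
  intros H. unfold TPF. apply cont_plus. apply cont_const.
  induction H; simpl. apply cont_const. apply cont_plus; auto. apply cont_tprod; auto.
Qed.

Lemma smooth_TPF n c Ts : TPok n Ts -> smooth_Rn n (TPF n c Ts).
Proof.
  intros HT. split.
  - intros x y H. apply TPF_ext; auto.
  - intros l Hl. destruct (iter_partial_TPF n c Ts l HT Hl) as [c' [Ts' [H1 H2]]].
    rewrite H2. split. apply cont_TPF; auto.
    intros i x Hi. eexists. apply is_derive_TPF; auto.
Qed.

Definition one_fun : nat -> R -> R := fun _ _ => 1.
Definition single (j : nat) (phi : R -> R) : nat -> R -> R :=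
  fun m => if Nat.eqb m j then phi else (fun _ => 1).
Definition pair (j1 j2 : nat) (phi psi : R -> R) : nat -> R -> R :=
  fun m => if Nat.eqb m j1 then phi else if Nat.eqb m j2 then psi else (fun _ => 1).

Lemma tprod_single j phi n x : tprod (single j phi) n x = if Nat.ltb j n then phi (x j) else 1.
Proof.
  induction n; simpl; auto. rewrite IHn. unfold single.
  destruct (Nat.ltb_spec j n); destruct (Nat.ltb_spec j (S n)); destruct (Nat.eqb_spec n j); try lia; subst; ring.
Qed.

Lemma tprod_pair j1 j2 phi psi n x : j1 <> j2 ->
  tprod (pair j1 j2 phi psi) n x = (if Nat.ltb j1 n then phi (x j1) else 1) * (if Nat.ltb j2 n then psi (x j2) else 1).
Proof.
  intros Hj. induction n; simpl; [ring|]. rewrite IHn. unfold pair.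
  destruct (Nat.ltb_spec j1 n); destruct (Nat.ltb_spec j1 (S n)); destruct (Nat.eqb_spec n j1);
  destruct (Nat.ltb_spec j2 n); destruct (Nat.ltb_spec j2 (S n)); destruct (Nat.eqb_spec n j2); try lia; subst; ring.
Qed.

Lemma single_ok n j phi : smooth_fun phi -> forall m, (m < n)%nat -> smooth_fun (single j phi m).
Proof. intros H m _. unfold single. destruct (Nat.eqb m j); auto. apply smooth_const. Qed.

Lemma pair_ok n j1 j2 phi psi : smooth_fun phi -> smooth_fun psi -> forall m, (m < n)%nat -> smooth_fun (pair j1 j2 phi psi m).
Proof. intros H1 H2 m _. unfold pair. destruct (Nat.eqb m j1); auto. destruct (Nat.eqb m j2); auto. apply smooth_const. Qed.


Lemma Rsum_ext {A} (f g : A -> R) l : (forall x, In x l -> f x = g x) -> Rsum (map f l) = Rsum (map g l).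
Proof. induction l; simpl; intros H; auto. rewrite H, IHl; auto. Qed.

Lemma Rsum_scal {A} (f : A -> R) c l : Rsum (map (fun x => c * f x) l) = c * Rsum (map f l).
Proof. induction l; simpl; [ring|]. rewrite IHl; ring. Qed.

Lemma Rsum_plus {A} (f g : A -> R) l : Rsum (map (fun x => f x + g x) l) = Rsum (map f l) + Rsum (map g l).
Proof. induction l; simpl; [ring|]. rewrite IHl; ring. Qed.

Lemma Rsum_zero {A} (f : A -> R) l : (forall x, In x l -> f x = 0) -> Rsum (map f l) = 0.
Proof. induction l; simpl; intros H; auto. rewrite H, IHl; auto. ring. Qed.

Lemma Rsum_app l1 l2 : Rsum (l1 ++ l2) = Rsum l1 + Rsum l2.
Proof. induction l1; simpl; [ring|]. rewrite IHl1; ring. Qed.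

Lemma Rsum_seq_single (f : nat -> R) s n i : (s <= i < s + n)%nat ->
  (forall m, (s <= m < s + n)%nat -> m <> i -> f m = 0) -> Rsum (map f (seq s n)) = f i.
Proof.
  revert s. induction n; intros s Hi H; [lia|]. simpl.
  destruct (Nat.eq_dec s i) as [->|Hs].
  - rewrite Rsum_zero. ring. intros m Hm.
    apply in_seq in Hm. apply H; lia.
  - rewrite H by lia. rewrite IHn; [ring|lia|]. intros; apply H; lia.
Qed.

Lemma map_nth_seq {A B} (f : A -> B) (l : list A) d : map f l = map (fun j => f (nth j l d)) (seq 0 (length l)).
Proof.
  induction l; simpl; auto. f_equal. rewrite IHl. rewrite <- seq_shift, map_map. auto.
Qed.

Lemma Rsum_seq_S (f : nat -> R) n : Rsum (map f (seq 0 (S n))) = Rsum (map f (seq 0 n)) + f n.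
Proof. rewrite seq_S, map_app, Rsum_app. simpl. ring. Qed.

Lemma subgroup_opp Gam g : subgroup Gam -> Gam g -> Gam (- g).
Proof. intros [H0 H] Hg. replace (-g) with (0 - g) by ring. auto. Qed.
Lemma subgroup_plus Gam a b : subgroup Gam -> Gam a -> Gam b -> Gam (a + b).
Proof. intros HG Ha Hb. replace (a + b) with (a - (- b)) by ring. apply HG; auto. apply subgroup_opp; auto. Qed.

Lemma Gam_nat Gam g n : subgroup Gam -> Gam g -> Gam (INR n * g).
Proof.
  intros HG Hg. induction n. simpl; rewrite Rmult_0_l; apply HG.
  rewrite S_INR, Rmult_plus_distr_r, Rmult_1_l. apply subgroup_plus; auto.
Qed.

Lemma Gam_Z Gam g z : subgroup Gam -> Gam g -> Gam (IZR z * g).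
Proof.
  intros HG Hg. destruct z.
  - simpl; rewrite Rmult_0_l; apply HG.
  - rewrite <- positive_nat_Z, <- INR_IZR_INZ. apply Gam_nat; auto.
  - replace (IZR (Z.neg p) * g) with (- (IZR (Z.pos p) * g)).
    apply subgroup_opp; auto. rewrite <- positive_nat_Z, <- INR_IZR_INZ. apply Gam_nat; auto.
    rewrite <- Pos2Z.opp_pos, opp_IZR. ring.
Qed.

Lemma nat_above x : exists N : nat, x < INR N.
Proof.
  destruct (archimed x) as [H1 H2].
  exists (Z.to_nat (up x) + 1)%nat. rewrite plus_INR. simpl.
  destruct (Z_lt_le_dec (up x) 0).
  - pose proof (pos_INR (Z.to_nat (up x))). apply IZR_lt in l. lra.
  - rewrite INR_IZR_INZ, Z2Nat.id by auto. lra.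
Qed.

Lemma small_step Gam l : subgroup Gam -> Gam l -> 0 < l -> forall eps, 0 < eps ->
  exists d, 0 < d < eps /\ forall z, Gbar Gam (IZR z * d).
Proof.
  intros HG Hl Hl0 eps He. destruct (classic (discrete Gam)) as [Hd|Hd].
  - destruct (nat_above (l / eps)) as [N HN].
    assert (HN0 : 0 < INR N). { apply Rlt_trans with (l/eps); auto. apply Rdiv_lt_0_compat; auto. }
    exists (l / INR N). split. split. apply Rdiv_lt_0_compat; auto.
    apply Rmult_lt_reg_r with (INR N); auto. unfold Rdiv; rewrite Rmult_assoc, Rinv_l by lra.
    apply Rmult_lt_reg_r with (/ eps). apply Rinv_0_lt_compat; auto.
    rewrite Rmult_1_r. rewrite (Rmult_comm eps), Rmult_assoc, Rinv_r by lra. rewrite Rmult_1_r. exact HN.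
    intros z. left. split; auto. exists N. split.
    destruct N; [simpl in HN0; lra| lia].
    replace (INR N * (IZR z * (l / INR N))) with (IZR z * l) by (field; lra).
    apply Gam_Z; auto.
  - assert (exists g, Gam g /\ g <> 0 /\ Rabs g < eps) as [g [Hg1 [Hg2 Hg3]]].
    { apply NNPP; intros Hn. apply Hd. exists eps. split; auto. intros g Hg Hg0.
      apply Rnot_lt_le. intros Hlt. apply Hn. exists g; auto. }
    exists (Rabs g). split. split; auto. apply Rabs_pos_lt; auto.
    intros z. right. split; auto. apply Gam_Z; auto.
    destruct (Rcase_abs g). rewrite Rabs_left by auto. apply subgroup_opp; auto.
    rewrite Rabs_right by auto; auto.
Qed.

Lemma density Gam l : subgroup Gam -> Gam l -> 0 < l -> forall a b, a < b ->
  exists y, a < y < b /\ Gbar Gam y.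
Proof.
  intros HG Hl Hl0 a b Hab. destruct (small_step Gam l HG Hl Hl0 (b - a)) as [d [[Hd1 Hd2] Hz]]; [lra|].
  destruct (archimed (a / d)) as [H1 H2].
  exists (IZR (up (a / d)) * d). split; [|apply Hz]. split.
  - apply Rmult_lt_reg_r with (/ d). apply Rinv_0_lt_compat; auto.
    rewrite Rmult_assoc, Rinv_r, Rmult_1_r by lra. exact H1.
  - assert (IZR (up (a / d)) * d <= (a / d + 1) * d) by (apply Rmult_le_compat_r; lra).
    replace ((a / d + 1) * d) with (a + d) in H by (field; lra). lra.
Qed.

Lemma tpt_int G e y : 0 < y < g_len G e -> tpt G e y = PE e y.
Proof. intros H. unfold tpt. destruct (Req_EM_T y 0); [lra|]. destruct (Req_EM_T y (g_len G e)); [lra|auto]. Qed.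

Lemma tpt_0 G e : tpt G e 0 = PV (g_src G e).
Proof. unfold tpt. destruct (Req_EM_T 0 0); [auto|lra]. Qed.

Lemma tpt_len G e : 0 < g_len G e -> tpt G e (g_len G e) = PV (g_tgt G e).
Proof. intros H. unfold tpt. destruct (Req_EM_T (g_len G e) 0); [lra|]. destruct (Req_EM_T (g_len G e) (g_len G e)); [auto|lra]. Qed.

Lemma tpt_PE_inv G e y e' y' : tpt G e y = PE e' y' -> e = e' /\ y = y'.
Proof. unfold tpt. destruct (Req_EM_T y 0); [discriminate|]. destruct (Req_EM_T y (g_len G e)); [discriminate|]. intros H; inversion H; auto. Qed.

Lemma tpt_PV_inv G e y v : tpt G e y = PV v -> y = 0 \/ y = g_len G e.
Proof. unfold tpt. destruct (Req_EM_T y 0); auto. destruct (Req_EM_T y (g_len G e)); auto. discriminate. Qed.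

Lemma incident_In G v e : In e (incident G v) <-> (e < g_nE G)%nat /\ (g_src G e = v \/ g_tgt G e = v).
Proof.
  unfold incident. rewrite filter_In, in_seq. rewrite Bool.orb_true_iff, !Nat.eqb_eq. lia.
Qed.

Lemma incident_NoDup G v : NoDup (incident G v).
Proof. apply NoDup_filter, seq_NoDup. Qed.


Definition Lj (G : wgraph) (v j : nat) : nat := nth j (incident G v) 0%nat.
Definition kk (G : wgraph) (v : nat) : nat := length (incident G v).
Definition outb (G : wgraph) (v j : nat) : bool := Nat.eqb (g_src G (Lj G v j)) v.

Definition star_H (G : wgraph) (v : nat) (del : nat -> R) (bnd : nat -> Prop) : wgraph := {|
  g_nV := S (kk G v); g_nE := kk G v;
  g_src := fun j => if outb G v j then 0%nat else S j;
  g_tgt := fun j => if outb G v j then S j else 0%nat;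
  g_len := del; g_wt := fun j => g_wt G (Lj G v j); g_bnd := bnd |}.

Definition star_off G v (del : nat -> R) j : R := if outb G v j then 0 else g_len G (Lj G v j) - del j.
Definition star_far G v (del : nat -> R) j : R := if outb G v j then del j else g_len G (Lj G v j) - del j.

Definition star_U0 G v del bnd : subgraph := {|
  sg := star_H G v del bnd; sg_par := Lj G v; sg_off := star_off G v del;
  sg_vpt := fun u => match u with O => PV v | S j => PE (Lj G v j) (star_far G v del j) end |}.

Definition star_U G v del : subgraph :=
  star_U0 G v del (fun u => sub_bnd G (star_U0 G v del (fun _ => False)) u).

Definition star_dist G v (del : nat -> R) j y : R := if outb G v j then y else del j - y.
Definition star_h G v del (Sl : nat -> nat -> Z) (i j : nat) (y : R) : R := IZR (Sl i j) * star_dist G v del j y.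

Definition del_ok G v (del : nat -> R) : Prop :=
  forall j, (j < kk G v)%nat -> 0 < del j < g_len G (Lj G v j).

Lemma Lj_in G v j : (j < kk G v)%nat -> In (Lj G v j) (incident G v).
Proof. intros; apply nth_In; auto. Qed.

Lemma Lj_props G v j : (j < kk G v)%nat -> (Lj G v j < g_nE G)%nat /\ (g_src G (Lj G v j) = v \/ g_tgt G (Lj G v j) = v).
Proof. intros H; apply incident_In, Lj_in; auto. Qed.

Lemma Lj_inj G v i j : (i < kk G v)%nat -> (j < kk G v)%nat -> Lj G v i = Lj G v j -> i = j.
Proof. intros Hi Hj E. apply (proj1 (NoDup_nth (incident G v) 0%nat) (incident_NoDup G v)); auto. Qed.

Lemma Lj_surj G v e : (e < g_nE G)%nat -> (g_src G e = v \/ g_tgt G e = v) -> exists j, (j < kk G v)%nat /\ Lj G v j = e.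
Proof.
  intros H1 H2. assert (In e (incident G v)) as Hin by (apply incident_In; auto).
  destruct (In_nth _ _ 0%nat Hin) as [j [Hj E]]. exists j; split; auto.
Qed.

Lemma outb_true G v j : outb G v j = true -> g_src G (Lj G v j) = v.
Proof. unfold outb; intros H; apply Nat.eqb_eq; auto. Qed.

Lemma outb_false G v j : wf_graph G -> (j < kk G v)%nat -> outb G v j = false ->
  g_tgt G (Lj G v j) = v /\ g_src G (Lj G v j) <> v.
Proof.
  unfold outb; intros HW Hj H. apply Nat.eqb_neq in H. destruct (Lj_props G v j Hj) as [_ [E|E]]; tauto.
Qed.

Lemma len_pos G v j : wf_graph G -> (j < kk G v)%nat -> 0 < g_len G (Lj G v j).
Proof. intros HW Hj. destruct (Lj_props G v j Hj) as [H _]. apply (HW _ H). Qed.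

Definition minl (k : nat) (del : nat -> R) : R := fold_right Rmin 1 (map del (seq 0 k)).

Lemma minl_pos k del : (forall j, (j < k)%nat -> 0 < del j) -> 0 < minl k del.
Proof.
  unfold minl. intros H.
  assert (forall l, (forall x, In x l -> 0 < x) -> 0 < fold_right Rmin 1 l) as Gen.
  { induction l; simpl; intros; [lra|]. apply Rmin_pos; auto. }
  apply Gen. intros x Hx. apply in_map_iff in Hx.
  destruct Hx as [m [<- Hm]]. apply in_seq in Hm. apply H; lia.
Qed.

Lemma minl_le k del j : (j < k)%nat -> minl k del <= del j.
Proof.
  unfold minl. intros Hj. assert (In (del j) (map del (seq 0 k))) as Hin.
  { apply in_map, in_seq; lia. }
  generalize Hin. generalize (map del (seq 0 k)). induction l; simpl; intros H; [tauto|].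
  destruct H as [<-|H]. apply Rmin_l. eapply Rle_trans; [apply Rmin_r|auto].
Qed.

Lemma star_in_sub_PE G v del bnd e y : wf_graph G -> del_ok G v del ->
  in_sub G (star_U0 G v del bnd) (PE e y) ->
  exists j, (j < kk G v)%nat /\ e = Lj G v j /\
    (if outb G v j then y <= del j else g_len G (Lj G v j) - del j <= y).
Proof.
  intros HW HD [[u [Hu E]]|[e' [y' [He [Hy E]]]]].
  - destruct u; simpl in E; [discriminate|]. inversion E; subst.
    exists u; split; [simpl in Hu; lia|]. split; auto. unfold star_far. destruct (outb G v u); lra.
  - simpl in *. symmetry in E. apply tpt_PE_inv in E. destruct E as [E1 E2]. subst.
    exists e'; split; auto. split; auto. unfold star_off in *. destruct (outb G v e'); lra.
Qed.

Lemma star_nbhd G v del bnd : wf_graph G -> del_ok G v del ->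
  nbhd G (in_sub G (star_U0 G v del bnd)) (PV v).
Proof.
  intros HW HD. split.
  - left. exists 0%nat. simpl. split; [lia|auto].
  - exists (minl (kk G v) del). split. apply minl_pos. intros j Hj; apply HD; auto.
    intros e y He Hy Hn. simpl in Hn.
    assert (g_src G e = v \/ g_tgt G e = v) as Hv by tauto.
    destruct (Lj_surj G v e He Hv) as [j [Hj <-]].
    pose proof (minl_le (kk G v) del j Hj). right. exists j.
    destruct (outb G v j) eqn:Ho.
    + pose proof (outb_true _ _ _ Ho).
      exists y. simpl. unfold star_off. rewrite Ho. split; auto.
      destruct Hn as [[_ Hn]|[Hn _]].
      split; [split; lra| rewrite Rplus_0_l; auto].
      exfalso. destruct (HW _ He) as [_ [_ [Hne _]]]. congruence.
    + destruct (outb_false G v j HW Hj Ho) as [Ht Hs].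
      exists (y - (g_len G (Lj G v j) - del j)). simpl. unfold star_off. rewrite Ho.
      destruct Hn as [[Hn _]|[_ Hn]]; [tauto|].
      split; auto. split; [split; lra|]. f_equal. ring.
Qed.

Lemma star_far_not_nbhd G v del bnd j : wf_graph G -> del_ok G v del -> (j < kk G v)%nat ->
  ~ nbhd G (in_sub G (star_U0 G v del bnd)) (PE (Lj G v j) (star_far G v del j)).
Proof.
  intros HW HD Hj [_ [eps [He H]]].
  destruct (HD j Hj) as [Hd1 Hd2]. set (len := g_len G (Lj G v j)) in *.
  set (m := Rmin eps (len - del j) / 2).
  assert (0 < m) by (unfold m; apply Rdiv_lt_0_compat; [apply Rmin_pos; lra|lra]).
  assert (m < eps) by (unfold m; pose proof (Rmin_l eps (len - del j)); lra).
  assert (m < len - del j) by (unfold m; pose proof (Rmin_r eps (len - del j)); lra).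
  destruct (Lj_props G v j Hj) as [HjE _].
  unfold star_far in *. destruct (outb G v j) eqn:Ho.
  - specialize (H (Lj G v j) (del j + m) HjE). 
    rewrite tpt_int in H by (fold len; lra).
    destruct (star_in_sub_PE G v del bnd _ _ HW HD (H ltac:(fold len; lra) ltac:(simpl; split; auto; rewrite Rabs_right; lra)))
      as [j' [Hj' [E1 E2]]].
    apply Lj_inj in E1; auto. subst j'. rewrite Ho in E2. lra.
  - specialize (H (Lj G v j) (len - del j - m) HjE).
    rewrite tpt_int in H by (fold len; lra).
    destruct (star_in_sub_PE G v del bnd _ _ HW HD (H ltac:(fold len; lra) ltac:(simpl; fold len; split; auto; rewrite Rabs_left; lra)))
      as [j' [Hj' [E1 E2]]].
    apply Lj_inj in E1; auto. subst j'. rewrite Ho in E2. fold len in E2. lra.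
Qed.


Lemma star_sub_bnd_far G v del j : wf_graph G -> del_ok G v del -> (j < kk G v)%nat ->
  sub_bnd G (star_U G v del) (S j).
Proof.
  intros HW HD Hj. right. apply (star_far_not_nbhd G v del _ j HW HD Hj).
Qed.

Lemma star_sub_bnd_0 G v del : wf_graph G -> del_ok G v del ->
  (sub_bnd G (star_U G v del) 0 <-> g_bnd G v).
Proof.
  intros HW HD. split.
  - intros [[v' [E H]]|H]. simpl in E. inversion E; subst; auto.
    exfalso; apply H. apply (star_nbhd G v del _ HW HD).
  - intros H. left. exists v. simpl; auto.
Qed.

Lemma star_is_subgraph G v del : wf_graph G -> (v < g_nV G)%nat -> del_ok G v del ->
  is_subgraph G (star_U G v del).
Proof.
  intros HW Hv HD. unfold is_subgraph. split; [|split; [|split; [|split; [|split; [|split]]]]].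
  - intros j Hj. simpl in *. destruct (Lj_props G v j Hj) as [HE _].
    destruct (HW _ HE) as [_ [_ [_ [_ Hw]]]]. destruct (HD j Hj).
    destruct (outb G v j); repeat split; try lia; auto.
  - intros u Hu. destruct u; simpl; auto. simpl in Hu.
    destruct (Lj_props G v u ltac:(lia)) as [HE _]. destruct (HD u ltac:(lia)).
    split; auto. unfold star_far; destruct (outb G v u); lra.
  - intros u1 u2 H1 H2 E. destruct u1, u2; simpl in E; try discriminate; auto.
    inversion E. f_equal. apply Lj_inj in H0; auto; simpl in *; lia.
  - intros j Hj. simpl in Hj |- *. destruct (Lj_props G v j Hj) as [HE _]. destruct (HD j Hj).
    unfold star_off, star_far. destruct (outb G v j) eqn:Ho; simpl; rewrite ?Ho; repeat split; auto; try lra.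
    + rewrite tpt_0, (outb_true _ _ _ Ho); auto.
    + rewrite Rplus_0_l, tpt_int; auto.
    + rewrite tpt_int; auto. lra.
    + replace (g_len G (Lj G v j) - del j + del j) with (g_len G (Lj G v j)) by ring.
      rewrite tpt_len by lra. destruct (outb_false G v j HW Hj Ho) as [Ht _]. rewrite Ht; auto.
  - intros e1 e2 H1 H2 Hne E. simpl in *. exfalso. apply Hne. apply Lj_inj in E; auto.
  - intros u e Hu He y Hy. simpl in *. destruct (HD e He).
    assert (Hin : 0 < star_off G v del e + y < g_len G (Lj G v e)).
    { unfold star_off; destruct (outb G v e); lra. }
    rewrite tpt_int by auto. destruct u; [discriminate|].
    intros E. inversion E as [[E1 E2]]. apply Lj_inj in E1; [|lia|auto]. subst u.
    unfold star_far, star_off in *. destruct (outb G v e); lra.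
  - intros u Hu. simpl. tauto.
Qed.

Lemma star_rational G Gam v del : wf_graph G -> del_ok G v del ->
  (forall j, (j < kk G v)%nat -> Gbar Gam (star_far G v del j)) ->
  forall u, (u < g_nV (sg (star_U G v del)))%nat -> rational_pt G Gam (sg_vpt (star_U G v del) u).
Proof.
  intros HW HD HR u Hu. destruct u; simpl. left; eauto.
  right. simpl in Hu. destruct (HD u ltac:(lia)). destruct (Lj_props G v u ltac:(lia)) as [HE _].
  exists (Lj G v u), (star_far G v del u).
  assert (0 < star_far G v del u < g_len G (Lj G v u)) by (unfold star_far; destruct (outb G v u); lra).
  split; auto. split. lra. split. apply HR; lia. rewrite tpt_int; auto.
Qed.

Lemma filter_all {A} (f : A -> bool) l : (forall x, In x l -> f x = true) -> filter f l = l.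
Proof. induction l; simpl; intros H; auto. rewrite H by auto. f_equal; auto. Qed.

Lemma star_incident_0 G v del : incident (sg (star_U G v del)) 0 = seq 0 (kk G v).
Proof.
  unfold incident. simpl. apply filter_all. intros j _. destruct (outb G v j); simpl; auto.
Qed.

Lemma star_incident_S G v del j e : In e (incident (sg (star_U G v del)) (S j)) -> e = j.
Proof.
  unfold incident. rewrite filter_In. simpl. intros [_ H].
  destruct (outb G v e); simpl in H;
  repeat match goal with H : context [Nat.eqb ?a ?b] |- _ => destruct (Nat.eqb_spec a b) end; simpl in H; try discriminate; lia.
Qed.

Lemma star_outf_h G v del Sl i j y : 
  outf (sg (star_U G v del)) false false (star_h G v del Sl i) 0 j y = IZR (Sl i j) * y.
Proof.
  unfold outf, star_h, star_dist. simpl. destruct (outb G v j); simpl; [auto|].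
  unfold rev_sign; simpl. ring.
Qed.

Lemma Derive_n_linear c n : Derive_n (fun y => c * y) n 0 = match n with O => 0 | 1%nat => c | _ => 0 end.
Proof.
  destruct n as [|[|n]].
  - simpl; ring.
  - transitivity (Derive_n (fun x => c * x + 0) 1 0). apply Derive_n_ext. intros; ring. apply Derive_n_lin1.
  - transitivity (Derive_n (fun x => c * x + 0) (S (S n)) 0). apply Derive_n_ext. intros; ring. apply Derive_n_lin.
Qed.

Definition balanced G v (Sl : nat -> nat -> Z) (n : nat) : Prop :=
  forall i, (i < n)%nat -> Rsum (map (fun j => INR (g_wt G (Lj G v j)) * IZR (Sl i j)) (seq 0 (kk G v))) = 0.

Lemma star_trop G Gam v del Sl n : wf_graph G -> del_ok G v del -> subgroup Gam ->
  (forall e, (e < g_nE G)%nat -> Gam (g_len G e)) ->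
  (~ g_bnd G v -> balanced G v Sl n) ->
  ZGam_trop G Gam (star_U G v del) n (star_h G v del Sl).
Proof.
  intros HW HD HG HL HB i Hi. split; [split; [split|]|].
  - intros e He. unfold star_h, star_dist. destruct (outb G v e).
    + apply smooth_ext with (fun y => IZR (Sl i e) * y + 0); [intros; ring|apply smooth_lin].
    + apply smooth_ext with (fun y => (- IZR (Sl i e)) * y + IZR (Sl i e) * del e); [intros; ring|apply smooth_lin].
  - intros u Hu. simpl in Hu. destruct u.
    + split. { intros _ e1 e2 _ _. rewrite !star_outf_h. ring. }
      intros Hnb. assert (Hnv : ~ g_bnd G v).
      { intros Hb. apply Hnb. apply (star_sub_bnd_0 G v del HW HD). auto. }
      specialize (HB Hnv i Hi). unfold balanced in HB.
      unfold valency. rewrite star_incident_0, length_seq.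
      assert (Ho : forall e, outf (sg (star_U G v del)) false false (star_h G v del Sl i) 0 e = fun y => IZR (Sl i e) * y).
      { intros e; apply functional_extensionality; intros y; apply star_outf_h. }
      simpl g_wt. split; [|split].
      * intros Hk e He. rewrite Ho. exists 1. split; [lra|]. intros y _. simpl.
        rewrite Hk in HB. simpl in HB.
        assert (E : IZR (Sl i 0%nat) = 0).
        { destruct (HD 0%nat ltac:(lia)). destruct (Lj_props G v 0%nat ltac:(lia)) as [HE _].
          destruct (HW _ HE) as [_ [_ [_ [_ Hw]]]]. apply lt_0_INR in Hw.
          rewrite Rplus_0_r in HB. apply Rmult_integral in HB. destruct HB as [HB|HB]; [lra|]. lra. }
        apply in_seq in He. assert (e = 0%nat) by lia. subst. rewrite E; ring.
      * intros Hk e1 e2 H1 H2 Hne. rewrite !Ho. intros m. rewrite !Derive_n_linear.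
        rewrite Hk in HB, H1, H2. simpl in HB. apply in_seq in H1. apply in_seq in H2.
        destruct m as [|[|m]]; simpl; try ring.
        assert ((e1 = 0 /\ e2 = 1) \/ (e1 = 1 /\ e2 = 0))%nat as [[-> ->]|[-> ->]] by lia; lra.
      * intros Hk. rewrite <- HB. apply Rsum_ext. intros e _. rewrite Ho.
        f_equal. apply is_derive_unique. apply is_derive_ext with (fun y => IZR (Sl i e) * y + 0).
        2: apply is_derive_lin. intros t; simpl; ring.
    + split. { intros _ e1 e2 H1 H2. apply star_incident_S in H1. apply star_incident_S in H2. subst; auto. }
      intros Hnb. exfalso. apply Hnb. apply (star_sub_bnd_far G v del u HW HD). lia.
  - intros e He. simpl in He. unfold star_h, star_dist. destruct (outb G v e).
    + exists (IZR (Sl i e)), 0. intros; ring.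
    + exists (- IZR (Sl i e)), (IZR (Sl i e) * del e). intros; ring.
  - intros e He. simpl in He |- *. destruct (Lj_props G v e He) as [HE _].
    unfold star_h, star_dist, star_off. destruct (outb G v e).
    + exists (Sl i e), 0. split. intros; ring. split.
      replace (0 - IZR (Sl i e) * 0) with 0 by ring. apply HG.
      replace (0 + IZR (Sl i e) * (g_len G (Lj G v e) - 0)) with (IZR (Sl i e) * g_len G (Lj G v e)) by ring.
      apply Gam_Z; auto.
    + exists (- Sl i e)%Z, (IZR (Sl i e) * del e). split. intros; rewrite opp_IZR; ring. split.
      replace (IZR (Sl i e) * del e - IZR (- Sl i e) * (g_len G (Lj G v e) - del e)) with (IZR (Sl i e) * g_len G (Lj G v e)) by (rewrite opp_IZR; ring).
      apply Gam_Z; auto.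
      replace (IZR (Sl i e) * del e + IZR (- Sl i e) * (g_len G (Lj G v e) - (g_len G (Lj G v e) - del e))) with 0 by (rewrite opp_IZR; ring).
      apply HG.
Qed.

Definition Pout (n : nat) (p q : bool) (g : nat -> nat -> (nat -> R) -> R) (Sl : nat -> nat -> Z) (j : nat) (d : R) : R :=
  Rsum (map (fun i => Rsum (map (fun i' =>
     (if p then IZR (Sl i j) else 1) * (if q then IZR (Sl i' j) else 1) * g i i' (fun m => IZR (Sl m j) * d)) (idx q n))) (idx p n)).

Lemma Derive_star_h G v del Sl i e y :
  Derive (star_h G v del Sl i e) y = (if outb G v e then 1 else -1) * IZR (Sl i e).
Proof.
  unfold star_h, star_dist. destruct (outb G v e); apply is_derive_unique.
  - apply is_derive_ext with (fun y => IZR (Sl i e) * y + 0). intros; simpl; ring.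
    evar_last. apply is_derive_lin. ring.
  - apply is_derive_ext with (fun y => (- IZR (Sl i e)) * y + IZR (Sl i e) * del e). intros; simpl; ring.
    evar_last. apply is_derive_lin. ring.
Qed.

Lemma star_pullback G v del Sl n p q g omega : wf_graph G -> del_ok G v del ->
  (forall j d, (j < kk G v)%nat -> 0 <= d <= del j -> Pout n p q g Sl j d = outf G p q omega v (Lj G v j) d) ->
  pullback_eq G (star_U G v del) n p q g (star_h G v del Sl) omega.
Proof.
  intros HW HD HP e y He Hy. simpl in He, Hy |- *. unfold pullback.
  set (sg := if outb G v e then 1 else -1).
  set (d := star_dist G v del e y).
  transitivity ((if p then sg else 1) * (if q then sg else 1) * Pout n p q g Sl e d).
  { unfold Pout. rewrite <- Rsum_scal. apply Rsum_ext. intros i _. rewrite <- Rsum_scal.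
    apply Rsum_ext. intros i' _. rewrite !Derive_star_h. fold sg.
    destruct p, q; unfold star_h; fold d; ring. }
  rewrite HP; auto.
  2:{ unfold d, star_dist. destruct (HD e He). destruct (outb G v e); lra. }
  unfold outf, sg, d, star_dist, star_off. fold (outb G v e).
  destruct (outb G v e) eqn:Ho.
  - rewrite Rplus_0_l. destruct p, q; ring.
  - replace (g_len G (Lj G v e) - (del e - y)) with (g_len G (Lj G v e) - del e + y) by ring.
    unfold rev_sign. destruct p, q; simpl; ring.
Qed.


Lemma smooth_Rsum (f : nat -> R -> R) l : (forall i, In i l -> smooth_fun (f i)) ->
  smooth_fun (fun x => Rsum (map (fun i => f i x) l)).
Proof.
  induction l; simpl; intros H. apply smooth_const.
  apply smooth_plus; auto.
Qed.

Lemma is_derive_Rsum (f f' : nat -> R -> R) l x : (forall i, In i l -> is_derive (f i) x (f' i x)) ->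
  is_derive (fun x => Rsum (map (fun i => f i x) l)) x (Rsum (map (fun i => f' i x) l)).
Proof.
  induction l; simpl; intros H. apply is_derive_cst.
  evar_last. apply (is_derive_plus (f a) (fun x => Rsum (map (fun i => f i x) l))); auto. reflexivity.
Qed.

Lemma Rsum_delta (f : nat -> R) N j : (j < N)%nat ->
  Rsum (map (fun i => if Nat.eqb i j then f i else 0) (seq 0 N)) = f j.
Proof.
  intros Hj. rewrite (Rsum_seq_single _ 0 N j) by (try lia; intros m _ Hm; apply Nat.eqb_neq in Hm; rewrite Hm; auto).
  rewrite Nat.eqb_refl; auto.
Qed.

Lemma Rsum_const N c : Rsum (map (fun _ : nat => c) (seq 0 N)) = INR N * c.
Proof. induction N. simpl; ring. rewrite Rsum_seq_S, IHN, S_INR. ring. Qed.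

Lemma idx_true n : idx true n = seq 0 n.
Proof. reflexivity. Qed.
Lemma idx_false n : idx false n = [0%nat].
Proof. reflexivity. Qed.

Lemma TPF_eval N c Ts x : TPF N c Ts x = c + Rsum (map (fun T => tprod T N x) Ts).
Proof. reflexivity. Qed.

Lemma TPok_app n l1 l2 : TPok n l1 -> TPok n l2 -> TPok n (l1 ++ l2).
Proof. intros; apply Forall_app; auto. Qed.

Lemma TPok_single n j phi : smooth_fun phi -> TPok n [single j phi].
Proof. intros H. constructor; [apply single_ok; auto| constructor]. Qed.

Lemma TPok_pair n j1 j2 phi psi : smooth_fun phi -> smooth_fun psi -> TPok n [pair j1 j2 phi psi].
Proof. intros H1 H2. constructor; [apply pair_ok; auto| constructor]. Qed.

Lemma TPok_nil n : TPok n [].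
Proof. constructor. Qed.

Lemma TPok_map n (F : nat -> nat -> R -> R) l : (forall i, In i l -> forall m, (m < n)%nat -> smooth_fun (F i m)) ->
  TPok n (map F l).
Proof. induction l; simpl; intros H; constructor. apply H; auto. apply IHl; intros; apply H; auto. Qed.

Definition oo G p q omega v j := outf G p q omega v (Lj G v j).
Definition ww G v j := INR (g_wt G (Lj G v j)).

Lemma ww_pos G v j : wf_graph G -> (j < kk G v)%nat -> 0 < ww G v j.
Proof.
  intros HW Hj. destruct (Lj_props G v j Hj) as [HE _]. destruct (HW _ HE) as [_ [_ [_ [_ H]]]].
  apply lt_0_INR; auto.
Qed.

Lemma oo_smooth G p q omega v j : is_form G p q omega -> (j < kk G v)%nat -> smooth_fun (oo G p q omega v j).
Proof.
  intros [HS _] Hj. destruct (Lj_props G v j Hj) as [HE _]. unfold oo, outf.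
  destruct (Nat.eqb (g_src G (Lj G v j)) v). apply HS; auto.
  apply smooth_scal. apply smooth_ext with (fun y => omega (Lj G v j) (-1 * y + g_len G (Lj G v j))).
  intros; f_equal; ring. apply smooth_aff, HS; auto.
Qed.

Lemma oo_cont G omega v i j : is_form G false false omega -> (v < g_nV G)%nat ->
  (i < kk G v)%nat -> (j < kk G v)%nat -> oo G false false omega v i 0 = oo G false false omega v j 0.
Proof.
  intros [_ HF] Hv Hi Hj. destruct (HF v Hv) as [HC _]. apply HC; auto; apply Lj_in; auto.
Qed.

Lemma sum_incident (F : nat -> R) G v : Rsum (map F (incident G v)) = Rsum (map (fun j => F (Lj G v j)) (seq 0 (kk G v))).
Proof. unfold Lj, kk. rewrite (map_nth_seq F (incident G v) 0%nat). auto. Qed.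

Lemma TPF_single N c j phi x : (j < N)%nat -> TPF N c [single j phi] x = c + phi (x j).
Proof.
  intros Hj. unfold TPF. simpl. rewrite tprod_single. destruct (Nat.ltb_spec j N); [ring|lia].
Qed.

Lemma TPF_nil N c x : TPF N c [] x = c.
Proof. unfold TPF; simpl; ring. Qed.

Lemma TPF_app N c l1 l2 x : TPF N c (l1 ++ l2) x = TPF N c l1 x + TPF N 0 l2 x.
Proof. unfold TPF. rewrite map_app, Rsum_app. ring. Qed.

Lemma TPF_singles N c (phi : nat -> R -> R) l x : (forall i, In i l -> (i < N)%nat) ->
  TPF N c (map (fun i => single i (phi i)) l) x = c + Rsum (map (fun i => phi i (x i)) l).
Proof.
  intros H. unfold TPF. f_equal. rewrite map_map. apply Rsum_ext. intros i Hi.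
  rewrite tprod_single. destruct (Nat.ltb_spec i N); auto. specialize (H i Hi); lia.
Qed.

Lemma TPF_pair N c j1 j2 phi psi x : (j1 < N)%nat -> (j2 < N)%nat -> j1 <> j2 ->
  TPF N c [pair j1 j2 phi psi] x = c + phi (x j1) * psi (x j2).
Proof.
  intros H1 H2 H3. unfold TPF. simpl. rewrite tprod_pair by auto.
  destruct (Nat.ltb_spec j1 N); [|lia]. destruct (Nat.ltb_spec j2 N); [|lia]. ring.
Qed.

Lemma smooth_Rn_TPF n c Ts : TPok n Ts -> smooth_Rn n (TPF n c Ts).
Proof. apply smooth_TPF. Qed.

Definition Sl_id : nat -> nat -> Z := fun i j => if Nat.eqb i j then 1%Z else 0%Z.

Lemma eta_bnd G p q omega v : wf_graph G -> (v < g_nV G)%nat -> is_form G p q omega ->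
  exists g, lagerberg (kk G v) p q g /\
    forall j d, (j < kk G v)%nat -> Pout (kk G v) p q g Sl_id j d = oo G p q omega v j d.
Proof.
  intros HW Hv HF. set (k := kk G v).
  assert (Hsm : forall i, (i < k)%nat -> smooth_fun (oo G p q omega v i)) by (intros; apply oo_smooth; auto).
  assert (HX : forall j d i, IZR (Sl_id i j) * d = if Nat.eqb i j then d else 0).
  { intros j d i. unfold Sl_id. destruct (Nat.eqb i j); simpl; ring. }
  destruct p, q.
  - exists (fun i i' => TPF k 0 (if Nat.eqb i i' then [single i (oo G true true omega v i)] else [])).
    split.
    + intros i i' Hi Hi'. apply in_seq in Hi, Hi'. apply smooth_TPF. destruct (Nat.eqb i i').
      apply TPok_single; apply Hsm; lia. apply TPok_nil.
    + intros j d Hj. unfold Pout. rewrite !idx_true. fold k.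
      rewrite (Rsum_seq_single _ 0 k j); [| lia |].
      * rewrite (Rsum_seq_single _ 0 k j); [| lia |].
        rewrite Nat.eqb_refl, TPF_single by lia. cbv beta. rewrite HX, Nat.eqb_refl. unfold Sl_id; rewrite Nat.eqb_refl. simpl; rewrite ?Rmult_1_l, ?Rmult_1_r, ?Rplus_0_l, ?Rplus_0_r; reflexivity.
        intros m _ Hm. unfold Sl_id. apply Nat.eqb_neq in Hm. rewrite Hm. simpl; ring.
      * intros m _ Hm. apply Rsum_zero. intros i' _. unfold Sl_id. apply Nat.eqb_neq in Hm. rewrite Hm. simpl; ring.
  - exists (fun i i' => TPF k 0 [single i (oo G true false omega v i)]).
    split.
    + intros i i' Hi Hi'. apply in_seq in Hi. apply smooth_TPF. apply TPok_single; apply Hsm; lia.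
    + intros j d Hj. unfold Pout. rewrite idx_true, idx_false. fold k.
      rewrite (Rsum_seq_single _ 0 k j); [| lia |].
      * simpl. rewrite TPF_single by lia. cbv beta. rewrite HX, Nat.eqb_refl. unfold Sl_id; rewrite Nat.eqb_refl. simpl; rewrite ?Rmult_1_l, ?Rmult_1_r, ?Rplus_0_l, ?Rplus_0_r; reflexivity.
      * intros m Hmk Hm. simpl. unfold Sl_id. apply Nat.eqb_neq in Hm. rewrite Hm. simpl; ring.
  - exists (fun i i' => TPF k 0 [single i' (oo G false true omega v i')]).
    split.
    + intros i i' Hi Hi'. apply in_seq in Hi'. apply smooth_TPF. apply TPok_single; apply Hsm; lia.
    + intros j d Hj. unfold Pout. rewrite idx_true, idx_false. fold k. simpl.
      rewrite (Rsum_seq_single _ 0 k j); [| lia |].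
      * rewrite TPF_single by lia. cbv beta. rewrite HX, Nat.eqb_refl. unfold Sl_id; rewrite Nat.eqb_refl. simpl; rewrite ?Rmult_1_l, ?Rmult_1_r, ?Rplus_0_l, ?Rplus_0_r; reflexivity.
      * intros m Hmk Hm. unfold Sl_id. apply Nat.eqb_neq in Hm. rewrite Hm. simpl; ring.
  - set (a := oo G false false omega v 0%nat 0).
    exists (fun i i' => TPF k a (map (fun i => single i (fun s => oo G false false omega v i s - a)) (seq 0 k))).
    split.
    + intros i i' _ _. apply smooth_TPF. apply TPok_map. intros m Hm m' Hm'. apply (single_ok k); [apply smooth_minus; [apply Hsm; apply in_seq in Hm; lia| apply smooth_const] | exact Hm'].
    + intros j d Hj. unfold Pout. rewrite idx_false. simpl.
      rewrite TPF_singles by (intros i Hi; apply in_seq in Hi; lia).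
      rewrite (Rsum_seq_single _ 0 k j); [| lia |].
      * cbv beta. rewrite HX, Nat.eqb_refl. ring.
      * intros m Hmk Hm. cbv beta. rewrite HX. apply Nat.eqb_neq in Hm. rewrite Hm.
        unfold a. rewrite (oo_cont G omega v m 0%nat); auto; try lia. ring.
Qed.


Lemma Derive_n_minus_smooth f g n x : smooth_fun f -> smooth_fun g ->
  Derive_n (fun y => f y - g y) n x = Derive_n f n x - Derive_n g n x.
Proof.
  intros Hf Hg. 
  assert (chain (fun n y => Derive_n f n y - Derive_n g n y)) as H.
  { intros m y. apply (is_derive_minus (Derive_n f m) (Derive_n g m)); [apply smooth_chain; auto| apply smooth_chain; auto]. }
  rewrite <- (chain_Derive_n _ H n x). apply Derive_n_ext. intros; simpl; auto.
Qed.

Lemma flat_alg w0 w1 al be c1 c2 D0 D1 n : 0 < w0 -> 0 < w1 -> al <> 0 -> c1 * be = c2 * al ->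
  w0 ^ n * (al * D0) = (-1) ^ n * w1 ^ n * (be * D1) ->
  c2 * (- / w0) ^ n * D1 - c1 * (/ w1) ^ n * D0 = 0.
Proof.
  intros H0 H1 Ha Hc E.
  replace (- / w0) with (-1 * / w0) by ring. rewrite Rpow_mult_distr, !pow_inv.
  pose proof (pow_lt _ n H0). pose proof (pow_lt _ n H1).
  set (s := (-1) ^ n) in *. set (P0 := w0 ^ n) in *. set (P1 := w1 ^ n) in *.
  assert (D0 = s * P1 * be * D1 / (P0 * al)) as ->.
  { apply Rmult_eq_reg_l with (P0 * al). replace (P0 * al * D0) with (P0 * (al * D0)) by ring.
    rewrite E. field. split; lra. apply Rmult_integral_contrapositive; split; lra. }
  replace (c2 * (s * / P0) * D1 - c1 * / P1 * (s * P1 * be * D1 / (P0 * al))) with (s * D1 / (P0 * al) * (c2 * al - c1 * be)) by (field; split; lra).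
  rewrite Hc. ring.
Qed.

Lemma glue_construct (o0 o1 : R -> R) (w0 w1 al be c1 c2 : R) :
  smooth_fun o0 -> smooth_fun o1 -> 0 < w0 -> 0 < w1 -> al <> 0 -> c1 * be = c2 * al ->
  (forall n, w0 ^ n * (al * Derive_n o0 n 0) = (-1) ^ n * w1 ^ n * (be * Derive_n o1 n 0)) ->
  exists Gf, smooth_fun Gf /\ (forall d, 0 <= d -> Gf (w1 * d) = c1 * o0 d) /\
                               (forall d, 0 <= d -> Gf (- w0 * d) = c2 * o1 d).
Proof.
  intros S0 S1 H0 H1 Ha Hc HV.
  set (A := fun u => c1 * o0 (/ w1 * u + 0)).
  set (B := fun u => c2 * o1 (- / w0 * u + 0)).
  set (Dd := fun u => B u - A u).
  assert (SA : smooth_fun A) by (apply smooth_scal, smooth_aff; auto).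
  assert (SB : smooth_fun B) by (apply smooth_scal, smooth_aff; auto).
  assert (Flat : forall n, Derive_n Dd n 0 = 0).
  { intros n. unfold Dd. rewrite Derive_n_minus_smooth by auto.
    unfold A, B. rewrite !Derive_n_aff by auto. rewrite !Rmult_0_r, !Rplus_0_r.
    apply (flat_alg w0 w1 al be); auto. }
  exists (fun u => A u + glue0 Dd u). split; [|split].
  - apply smooth_plus; auto. apply smooth_flat_glue; auto. apply smooth_minus; auto.
  - intros d Hd. unfold glue0. destruct (Rlt_dec (w1 * d) 0).
    + exfalso. pose proof (Rmult_le_pos w1 d ltac:(lra) Hd). lra.
    + unfold A. replace (/ w1 * (w1 * d) + 0) with d by (field; lra). ring.
  - intros d Hd. unfold glue0. destruct (Rlt_dec (- w0 * d) 0).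
    + unfold Dd, B. replace (- / w0 * (- w0 * d) + 0) with d by (field; lra). ring.
    + assert (d = 0) as -> by (destruct Hd as [Hd|Hd]; auto; exfalso; apply n; nra).
      replace (- w0 * 0) with 0 by ring.
      pose proof (Flat 0%nat) as F0. simpl in F0. unfold Dd in F0.
      unfold B in F0. replace (- / w0 * 0 + 0) with 0 in F0 by ring. lra.
Qed.

Definition Sl2 G v : nat -> nat -> Z := fun i j =>
  if Nat.eqb j 0 then Z.of_nat (g_wt G (Lj G v 1)) else (- Z.of_nat (g_wt G (Lj G v 0)))%Z.

Lemma Sl2_0 G v i : IZR (Sl2 G v i 0) = ww G v 1.
Proof. unfold Sl2, ww. simpl. rewrite INR_IZR_INZ. auto. Qed.
Lemma Sl2_1 G v i : IZR (Sl2 G v i 1) = - ww G v 0.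
Proof. unfold Sl2, ww. simpl. rewrite opp_IZR, INR_IZR_INZ. auto. Qed.

Lemma eta_val2 G p q omega v : wf_graph G -> (v < g_nV G)%nat -> is_form G p q omega -> ~ g_bnd G v ->
  kk G v = 2%nat ->
  exists g, lagerberg 1 p q g /\
    forall j d, (j < kk G v)%nat -> 0 <= d -> Pout 1 p q g (Sl2 G v) j d = oo G p q omega v j d.
Proof.
  intros HW Hv HF Hnb Hk.
  pose proof (oo_smooth G p q omega v 0 HF ltac:(lia)) as S0.
  pose proof (oo_smooth G p q omega v 1 HF ltac:(lia)) as S1.
  pose proof (ww_pos G v 0 HW ltac:(lia)) as W0. pose proof (ww_pos G v 1 HW ltac:(lia)) as W1.
  set (w0 := ww G v 0) in *. set (w1 := ww G v 1) in *.
  set (o0 := oo G p q omega v 0) in *. set (o1 := oo G p q omega v 1) in *.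
  assert (Hv2 : forall n, w0 ^ n * ((if p then (if q then w0 ^ 2 else w0) else if q then w0 else 1) * Derive_n o0 n 0)
     = (-1) ^ n * w1 ^ n * ((if p then (if q then w1 ^ 2 else - w1) else if q then - w1 else 1) * Derive_n o1 n 0)).
  { destruct HF as [HS HFv]. destruct (HFv v Hv) as [_ Hint]. destruct (Hint Hnb) as [_ [H2 _]].
    assert (Hne : Lj G v 0 <> Lj G v 1) by (intros E; apply Lj_inj in E; lia).
    specialize (H2 Hk (Lj G v 0) (Lj G v 1) (Lj_in G v 0 ltac:(lia)) (Lj_in G v 1 ltac:(lia)) Hne).
    intros n.
    destruct p, q; simpl in H2; unfold val2_cond in H2; specialize (H2 n); rewrite ?Derive_n_scal_l in H2; fold o0 o1 in H2; unfold w0, w1, ww.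
    - exact H2.
    - match type of H2 with context [Derive_n (fun y => - (?c * ?f y)) ?m ?x] =>
        replace (Derive_n (fun y => - (c * f y)) m x) with (- c * Derive_n f m x) in H2
          by (rewrite <- Derive_n_scal_l; apply Derive_n_ext; intros; ring) end.
      exact H2.
    - match type of H2 with context [Derive_n (fun y => - (?c * ?f y)) ?m ?x] =>
        replace (Derive_n (fun y => - (c * f y)) m x) with (- c * Derive_n f m x) in H2
          by (rewrite <- Derive_n_scal_l; apply Derive_n_ext; intros; ring) end.
      exact H2.
    - rewrite !Rmult_1_l. exact H2. }
  set (e := ((if p then 1 else 0) + (if q then 1 else 0))%nat).
  destruct (glue_construct o0 o1 w0 w1
     (if p then (if q then w0 ^ 2 else w0) else if q then w0 else 1)
     (if p then (if q then w1 ^ 2 else - w1) else if q then - w1 else 1)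
     (/ w1 ^ e) (/ (- w0) ^ e) S0 S1 W0 W1) as [Gf [SG [G0 G1]]]; auto.
  { destruct p, q; simpl; apply Rgt_not_eq; nra. }
  { unfold e; destruct p, q; simpl; field; lra. }
  exists (fun _ _ => TPF 1 0 [single 0 Gf]). split.
  - intros i i' _ _. apply smooth_TPF, TPok_single; auto.
  - intros j d Hj Hd. rewrite Hk in Hj. unfold Pout. 
    assert (Ei : forall b, idx b 1 = [0%nat]) by (destruct b; reflexivity). rewrite !Ei. simpl.
    rewrite TPF_single by lia. cbv beta.
    destruct j as [|[|j]]; [| |lia].
    + rewrite Sl2_0. fold w1. rewrite G0 by auto.
      unfold e, o0, o1 in *; destruct p, q; simpl; field; lra.
    + rewrite Sl2_1. fold w0. rewrite G1 by auto.
      unfold e, o0, o1 in *; destruct p, q; simpl; field; lra.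
Qed.


Definition Sl3 G v : nat -> nat -> Z := fun i j =>
  if Nat.eqb j (kk G v - 1) then (- Z.of_nat (g_wt G (Lj G v i)))%Z
  else if Nat.eqb i j then Z.of_nat (g_wt G (Lj G v (kk G v - 1))) else 0%Z.

Lemma Sl3_N G v i : IZR (Sl3 G v i (kk G v - 1)) = - ww G v i.
Proof. unfold Sl3. rewrite Nat.eqb_refl. rewrite opp_IZR, <- INR_IZR_INZ. auto. Qed.

Lemma Sl3_j G v i j : (j < kk G v - 1)%nat -> IZR (Sl3 G v i j) = if Nat.eqb i j then ww G v (kk G v - 1) else 0.
Proof.
  intros Hj. unfold Sl3. destruct (Nat.eqb_spec j (kk G v - 1)); [lia|].
  destruct (Nat.eqb i j); auto. rewrite <- INR_IZR_INZ; auto.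
Qed.

Lemma Sl3_balanced G v : balanced G v (Sl3 G v) (kk G v - 1).
Proof.
  intros i Hi. unfold balanced.
  replace (seq 0 (kk G v)) with (seq 0 (S (kk G v - 1))) by (f_equal; lia). rewrite Rsum_seq_S.
  rewrite (Rsum_seq_single _ 0 (kk G v - 1) i); [| lia |].
  - rewrite Sl3_j, Nat.eqb_refl by lia. rewrite Sl3_N. unfold ww. ring.
  - intros m Hm Hmi. rewrite Sl3_j by lia. destruct (Nat.eqb_spec i m); [lia|]. ring.
Qed.

Lemma dsum N (a F : nat -> R) c : (1 < N)%nat ->
  Rsum (map (fun i => Rsum (map (fun i' => a i * a i' * ((if Nat.eqb i i' then F i else 0) + (if andb (Nat.eqb i 0) (Nat.eqb i' 1) then c else 0))) (seq 0 N))) (seq 0 N))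
  = Rsum (map (fun i => a i * a i * F i) (seq 0 N)) + a 0%nat * a 1%nat * c.
Proof.
  intros HN.
  rewrite (Rsum_ext _ (fun i => a i * a i * F i + (if Nat.eqb i 0 then a 0%nat * a 1%nat * c else 0))).
  - rewrite Rsum_plus. f_equal. rewrite (Rsum_seq_single _ 0 N 0); [| lia |]. rewrite Nat.eqb_refl; auto.
    intros m _ Hm. apply Nat.eqb_neq in Hm. rewrite Hm; auto.
  - intros i Hi. apply in_seq in Hi.
    rewrite (Rsum_ext _ (fun i' => a i * a i' * (if Nat.eqb i i' then F i else 0) + a i * a i' * (if andb (Nat.eqb i 0) (Nat.eqb i' 1) then c else 0)))
      by (intros; ring).
    rewrite Rsum_plus. f_equal.
    + rewrite (Rsum_seq_single _ 0 N i); [| lia |]. rewrite Nat.eqb_refl; auto.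
      intros m _ Hm. destruct (Nat.eqb_spec i m); [lia|]. ring.
    + destruct (Nat.eqb_spec i 0).
      * subst. rewrite (Rsum_seq_single _ 0 N 1); [| lia |]. simpl. auto.
        intros m _ Hm. destruct (Nat.eqb_spec m 1); [lia|]. simpl. ring.
      * apply Rsum_zero. intros; simpl. ring.
Qed.

Lemma val3_interior G p q omega v : is_form G p q omega -> (v < g_nV G)%nat -> ~ g_bnd G v -> (3 <= kk G v)%nat ->
  match p, q with
  | false, false => Rsum (map (fun j => ww G v j * Derive (oo G p q omega v j) 0) (seq 0 (kk G v))) = 0
  | true, true => True
  | _, _ => Rsum (map (fun j => ww G v j * oo G p q omega v j 0) (seq 0 (kk G v))) = 0
  end.
Proof.
  intros [_ HF] Hv Hnb Hk. destruct (HF v Hv) as [_ Hint]. destruct (Hint Hnb) as [_ [_ H3]].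
  specialize (H3 Hk). destruct p, q; auto; rewrite sum_incident in H3; exact H3.
Qed.

Lemma w_pos_all G v : wf_graph G -> forall i, (i < kk G v)%nat -> 0 < ww G v i.
Proof. intros; apply ww_pos; auto. Qed.

Lemma eta_val3_FF G omega v : wf_graph G -> (v < g_nV G)%nat -> is_form G false false omega -> ~ g_bnd G v ->
  (3 <= kk G v)%nat ->
  exists g, lagerberg (kk G v - 1) false false g /\
    forall j d, (j < kk G v)%nat -> Pout (kk G v - 1) false false g (Sl3 G v) j d = oo G false false omega v j d.
Proof.
  intros HWf Hv HF Hnb Hk.
  pose proof (val3_interior G false false omega v HF Hv Hnb Hk) as Hder. simpl in Hder.
  set (N := (kk G v - 1)%nat) in *.
  assert (HkN : kk G v = S N) by lia.
  set (W := ww G v N).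
  set (o := oo G false false omega v) in *.
  set (a := o 0%nat 0).
  assert (Hc : forall i, (i < kk G v)%nat -> o i 0 = a).
  { intros i Hi. unfold o, a. apply oo_cont; auto; lia. }
  assert (Hsm : forall i, (i < kk G v)%nat -> smooth_fun (o i)) by (intros; apply oo_smooth; auto).
  assert (Hw : forall i, (i < kk G v)%nat -> 0 < ww G v i) by (intros; apply ww_pos; auto).
  assert (HW : 0 < W) by (apply Hw; lia).
  set (r := fun d => o N d - a - Rsum (map (fun i => o i (- ww G v i / W * d + 0) - a) (seq 0 N))).
  assert (Sr : smooth_fun r).
  { unfold r. apply smooth_minus. apply smooth_minus. apply Hsm; lia. apply smooth_const.
    apply (smooth_Rsum (fun i d => o i (- ww G v i / W * d + 0) - a)). intros i Hi. apply in_seq in Hi.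
    apply smooth_minus. apply smooth_aff, Hsm; lia. apply smooth_const. }
  assert (r0 : r 0 = 0).
  { unfold r. rewrite Hc by lia. rewrite Rsum_zero. ring. intros i Hi. apply in_seq in Hi.
    replace (- ww G v i / W * 0 + 0) with 0 by ring. rewrite Hc by lia. ring. }
  assert (Dr : Derive r 0 = 0).
  { apply is_derive_unique. unfold r. evar_last.
    apply (is_derive_minus (fun d => o N d - a)). apply (is_derive_minus (o N)). apply smooth_derive, Hsm; lia.
    apply is_derive_cst.
    apply (is_derive_Rsum (fun i d => o i (- ww G v i / W * d + 0) - a) (fun i d => - ww G v i / W * Derive (o i) 0 - 0)).
    intros i Hi. apply in_seq in Hi. apply (is_derive_minus (fun d => o i (- ww G v i / W * d + 0))).
    evar_last. apply (is_derive_comp (o i) (fun d => - ww G v i / W * d + 0)).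
    replace (- ww G v i / W * 0 + 0) with 0 by ring. apply smooth_derive, Hsm; lia.
    apply is_derive_lin. simpl. unfold scal; simpl; unfold mult; simpl. reflexivity.
    apply is_derive_cst.
    simpl. unfold minus, plus, opp; simpl.
    rewrite HkN, Rsum_seq_S in Hder. fold N in Hder.
    rewrite (Rsum_ext _ (fun i => (- / W) * (ww G v i * Derive (o i) 0))) by (intros; unfold Rdiv; ring).
    rewrite Rsum_scal. 
    apply Rmult_eq_reg_l with W; [|lra].
    replace (W * (Derive (o N) 0 + - 0 + - (- / W * Rsum (map (fun i => ww G v i * Derive (o i) 0) (seq 0 N)))))
      with (Rsum (map (fun j => ww G v j * Derive (o j) 0) (seq 0 N)) + ww G v N * Derive (o N) 0) by (fold W; field; lra).
    rewrite Hder. ring. }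
  destruct (division r Sr r0) as [rho [Srho [Hrho rho0]]]. rewrite Dr in rho0.
  set (chi := fun s => - / ww G v 1 * rho (- / ww G v 0 * s + 0)).
  assert (Schi : smooth_fun chi) by (apply smooth_scal, smooth_aff; auto).
  assert (chi0 : chi 0 = 0) by (unfold chi; replace (- / ww G v 0 * 0 + 0) with 0 by ring; rewrite rho0; ring).
  exists (fun _ _ => TPF N a (map (fun i => single i (fun s => o i (/ W * s + 0) - a)) (seq 0 N) ++ [pair 0 1 chi (fun s => 1 * s + 0)])).
  split.
  - intros i i' _ _. apply smooth_TPF. apply TPok_app.
    + apply TPok_map. intros m Hm m' Hm'. apply in_seq in Hm. apply (single_ok N); auto.
      apply smooth_minus. apply smooth_aff, Hsm; lia. apply smooth_const.
    + apply TPok_pair; auto. apply smooth_lin.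
  - intros j d Hj. unfold Pout. rewrite idx_false. simpl.
    rewrite TPF_app, TPF_singles, TPF_pair by (try (intros i Hi; apply in_seq in Hi); lia).
    cbv beta.
    assert (j < N \/ j = N)%nat as [HjN| ->] by lia.
    + rewrite (Rsum_seq_single _ 0 N j); [| lia |].
      * rewrite !Sl3_j by lia. rewrite Nat.eqb_refl. fold N. fold W.
        replace (/ W * (W * d) + 0) with d by (field; lra).
        replace ((if Nat.eqb 0 j then W else 0) * d) with (if Nat.eqb 0 j then W * d else 0) by (destruct (Nat.eqb 0 j); ring).
        destruct (Nat.eqb_spec 0 j).
        -- subst. simpl. ring.
        -- rewrite chi0. ring.
      * intros m Hm Hmj. rewrite Sl3_j by lia. destruct (Nat.eqb_spec m j); [lia|].
        replace (/ W * (0 * d) + 0) with 0 by ring. rewrite Hc by lia. ring.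
    + rewrite !Sl3_N. fold W.
      assert (E : chi (- ww G v 0 * d) * (1 * (- ww G v 1 * d) + 0) = r d).
      { rewrite <- Hrho. unfold chi. replace (- / ww G v 0 * (- ww G v 0 * d) + 0) with d.
        field. apply Rgt_not_eq, Hw; lia. field. apply Rgt_not_eq, Hw; lia. }
      rewrite E. unfold r.
      rewrite (Rsum_ext (fun i => o i (/ W * (IZR (Sl3 G v i N) * d) + 0) - a) (fun i => o i (- ww G v i / W * d + 0) - a)).
      ring. intros i Hi. apply in_seq in Hi. rewrite Sl3_N. f_equal. f_equal. field. lra.
Qed.

Lemma eta_val3_mixed G p q omega v : wf_graph G -> (v < g_nV G)%nat -> is_form G p q omega -> ~ g_bnd G v ->
  (3 <= kk G v)%nat -> xorb p q = true ->
  exists g, lagerberg (kk G v - 1) p q g /\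
    forall j d, (j < kk G v)%nat -> Pout (kk G v - 1) p q g (Sl3 G v) j d = oo G p q omega v j d.
Proof.
  intros HWf Hv HF Hnb Hk Hx.
  pose proof (val3_interior G p q omega v HF Hv Hnb Hk) as Hsum.
  assert (Hs : Rsum (map (fun j => ww G v j * oo G p q omega v j 0) (seq 0 (kk G v))) = 0)
    by (destruct p, q; simpl in Hx; try discriminate; exact Hsum).
  clear Hsum.
  set (N := (kk G v - 1)%nat) in *.
  assert (HkN : kk G v = S N) by lia.
  set (W := ww G v N).
  set (o := oo G p q omega v) in *.
  assert (Hsm : forall i, (i < kk G v)%nat -> smooth_fun (o i)) by (intros; apply oo_smooth; auto).
  assert (Hw : forall i, (i < kk G v)%nat -> 0 < ww G v i) by (intros; apply ww_pos; auto).
  assert (HW : 0 < W) by (apply Hw; lia).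
  assert (Hw0 : 0 < ww G v 0) by (apply Hw; lia). assert (Hw1 : 0 < ww G v 1) by (apply Hw; lia).
  set (rho := fun s => - / ww G v 0 * (o N (- / ww G v 1 * s + 0) +
        Rsum (map (fun i => ww G v i / W * o i (ww G v i / (ww G v 1 * W) * s + 0)) (seq 0 N)))).
  assert (Srho : smooth_fun rho).
  { unfold rho. apply smooth_scal, smooth_plus. apply smooth_aff, Hsm; lia.
    apply (smooth_Rsum (fun i s => ww G v i / W * o i (ww G v i / (ww G v 1 * W) * s + 0))).
    intros i Hi; apply in_seq in Hi. apply smooth_scal, smooth_aff, Hsm; lia. }
  assert (rho0 : rho 0 = 0).
  { unfold rho. rewrite HkN, Rsum_seq_S in Hs. fold N W in Hs.
    replace (- / ww G v 1 * 0 + 0) with 0 by ring.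
    rewrite (Rsum_ext _ (fun i => / W * (ww G v i * o i 0))).
    rewrite Rsum_scal.
    replace (Rsum (map (fun i => ww G v i * o i 0) (seq 0 N))) with (- (W * o N 0)) by lra.
    field. split; lra.
    intros i _. replace (ww G v i / (ww G v 1 * W) * 0 + 0) with 0 by ring. field. lra. }
  set (Gv := fun i => TPF N 0 ([single i (fun s => / W * o i (/ W * s + 0))] ++ (if Nat.eqb i 0 then [single 1 rho] else []))).
  assert (SGv : forall i, (i < N)%nat -> smooth_Rn N (Gv i)).
  { intros i Hi. apply smooth_TPF. apply TPok_app. apply TPok_single. apply smooth_scal, smooth_aff, Hsm; lia.
    destruct (Nat.eqb i 0). apply TPok_single; auto. apply TPok_nil. }
  assert (VGv : forall i X, (i < N)%nat -> Gv i X = / W * o i (/ W * X i + 0) + (if Nat.eqb i 0 then rho (X 1%nat) else 0)).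
  { intros i X Hi. unfold Gv. rewrite TPF_app, TPF_single by lia.
    destruct (Nat.eqb i 0). rewrite TPF_single by lia. ring. rewrite TPF_nil. ring. }
  assert (HQ : forall j d, (j < kk G v)%nat ->
     Rsum (map (fun i => IZR (Sl3 G v i j) * Gv i (fun m => IZR (Sl3 G v m j) * d)) (seq 0 N)) = o j d).
  { intros j d Hj. rewrite (Rsum_ext _ (fun i => IZR (Sl3 G v i j) * (/ W * o i (/ W * (IZR (Sl3 G v i j) * d) + 0) + (if Nat.eqb i 0 then rho (IZR (Sl3 G v 1 j) * d) else 0)))).
    2:{ intros i Hi; apply in_seq in Hi. rewrite VGv by lia. auto. }
    assert (j < N \/ j = N)%nat as [HjN| ->] by lia.
    - rewrite (Rsum_seq_single _ 0 N j); [| lia |].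
      + rewrite !Sl3_j by lia. rewrite Nat.eqb_refl. fold N. fold W.
        replace (/ W * (W * d) + 0) with d by (field; lra).
        destruct (Nat.eqb_spec j 0).
        * subst. simpl. replace (0 * d) with 0 by ring. rewrite rho0. field. lra.
        * field. lra.
      + intros m Hm Hmj. rewrite Sl3_j by lia. destruct (Nat.eqb_spec m j); [lia|]. ring.
    - rewrite (Rsum_ext _ (fun i => - ww G v i * (/ W * o i (/ W * (- ww G v i * d) + 0)) + (if Nat.eqb i 0 then - ww G v 0 * rho (- ww G v 1 * d) else 0))).
      2:{ intros i Hi. rewrite !Sl3_N. destruct (Nat.eqb_spec i 0). subst. ring. ring. }
      rewrite Rsum_plus. rewrite (Rsum_seq_single (fun i => if Nat.eqb i 0 then _ else 0) 0 N 0); [|lia|].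
      2:{ intros m _ Hm. destruct (Nat.eqb_spec m 0); [lia|auto]. }
      simpl. unfold rho.
      replace (- / ww G v 1 * (- ww G v 1 * d) + 0) with d by (field; lra).
      rewrite (Rsum_ext (fun i => ww G v i / W * o i (ww G v i / (ww G v 1 * W) * (- ww G v 1 * d) + 0))
                        (fun i => -1 * (- ww G v i * (/ W * o i (/ W * (- ww G v i * d) + 0))))).
      rewrite Rsum_scal. field. lra.
      intros i _. replace (ww G v i / (ww G v 1 * W) * (- ww G v 1 * d) + 0) with (/ W * (- ww G v i * d) + 0) by (field; lra).
      field. lra. }
  exists (fun i i' => Gv (if p then i else i')). split.
  - intros i i' Hi Hi'. destruct p, q; simpl in Hx; try discriminate; simpl in Hi, Hi'.
    + apply in_seq in Hi. apply SGv; lia.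
    + apply in_seq in Hi'. apply SGv; lia.
  - intros j d Hj. unfold Pout. rewrite <- (HQ j d Hj).
    destruct p, q; simpl in Hx; try discriminate; rewrite ?idx_true, ?idx_false.
    + simpl. apply Rsum_ext. intros i _. ring.
    + simpl. rewrite Rplus_0_r. apply Rsum_ext. intros i _. ring.
Qed.

Lemma eta_val3_TT G omega v : wf_graph G -> (v < g_nV G)%nat -> is_form G true true omega -> ~ g_bnd G v ->
  (3 <= kk G v)%nat ->
  exists g, lagerberg (kk G v - 1) true true g /\
    forall j d, (j < kk G v)%nat -> Pout (kk G v - 1) true true g (Sl3 G v) j d = oo G true true omega v j d.
Proof.
  intros HWf Hv HF Hnb Hk.
  set (N := (kk G v - 1)%nat) in *.
  assert (HkN : kk G v = S N) by lia.
  set (W := ww G v N).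
  set (o := oo G true true omega v) in *.
  assert (Hsm : forall i, (i < kk G v)%nat -> smooth_fun (o i)) by (intros; apply oo_smooth; auto).
  assert (Hw : forall i, (i < kk G v)%nat -> 0 < ww G v i) by (intros; apply ww_pos; auto).
  assert (HW : 0 < W) by (apply Hw; lia).
  assert (Hw0 : 0 < ww G v 0) by (apply Hw; lia). assert (Hw1 : 0 < ww G v 1) by (apply Hw; lia).
  set (rho := fun s => / (ww G v 0 * ww G v 1) * (o N (- / ww G v 0 * s + 0) -
        Rsum (map (fun i => (ww G v i * ww G v i) / (W * W) * o i (ww G v i / (ww G v 0 * W) * s + 0)) (seq 0 N)))).
  assert (Srho : smooth_fun rho).
  { unfold rho. apply smooth_scal, smooth_minus. apply smooth_aff, Hsm; lia.
    apply (smooth_Rsum (fun i s => (ww G v i * ww G v i) / (W * W) * o i (ww G v i / (ww G v 0 * W) * s + 0))).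
    intros i Hi; apply in_seq in Hi. apply smooth_scal, smooth_aff, Hsm; lia. }
  set (F := fun i => / (W * W) * o i (/ W * 0 + 0)).
  set (g := fun i i' => TPF N 0 ((if Nat.eqb i i' then [single i (fun s => / (W * W) * o i (/ W * s + 0))] else [])
                                 ++ (if andb (Nat.eqb i 0) (Nat.eqb i' 1) then [single 0 rho] else []))).
  assert (Vg : forall i i' X, (i < N)%nat ->
     g i i' X = (if Nat.eqb i i' then / (W * W) * o i (/ W * X i + 0) else 0) +
                (if andb (Nat.eqb i 0) (Nat.eqb i' 1) then rho (X 0%nat) else 0)).
  { intros i i' X Hi. unfold g. rewrite TPF_app.
    destruct (Nat.eqb i i'); [rewrite TPF_single by lia| rewrite TPF_nil];
    (destruct (andb (Nat.eqb i 0) (Nat.eqb i' 1)); [rewrite TPF_single by lia| rewrite TPF_nil]); ring. }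
  exists g. split.
  - intros i i' Hi Hi'. apply smooth_TPF. apply TPok_app.
    + destruct (Nat.eqb i i'). apply TPok_single. apply smooth_scal, smooth_aff, Hsm. apply in_seq in Hi. lia.
      apply TPok_nil.
    + destruct (andb _ _). apply TPok_single; auto. apply TPok_nil.
  - intros j d Hj. unfold Pout. rewrite idx_true.
    set (X := fun m => IZR (Sl3 G v m j) * d).
    rewrite (Rsum_ext _ (fun i => Rsum (map (fun i' => IZR (Sl3 G v i j) * IZR (Sl3 G v i' j) *
        ((if Nat.eqb i i' then / (W * W) * o i (/ W * X i + 0) else 0) +
         (if andb (Nat.eqb i 0) (Nat.eqb i' 1) then rho (X 0%nat) else 0))) (seq 0 N)))).
    2:{ intros i Hi. apply in_seq in Hi. apply Rsum_ext. intros i' _. rewrite Vg by lia. auto. }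
    rewrite (dsum N (fun i => IZR (Sl3 G v i j)) (fun i => / (W * W) * o i (/ W * X i + 0))) by lia.
    assert (j < N \/ j = N)%nat as [HjN| ->] by lia.
    + rewrite (Rsum_seq_single _ 0 N j); [| lia |].
      * unfold X. rewrite !Sl3_j by lia. rewrite Nat.eqb_refl. fold N. fold W.
        replace (/ W * (W * d) + 0) with d by (field; lra).
        replace ((if Nat.eqb 0 j then W else 0) * (if Nat.eqb 1 j then W else 0)) with 0.
        field. lra.
        destruct (Nat.eqb_spec 0 j), (Nat.eqb_spec 1 j); try lia; ring.
      * intros m Hm Hmj. rewrite Sl3_j by lia. destruct (Nat.eqb_spec m j); [lia|]. ring.
    + unfold X. rewrite !Sl3_N. unfold rho.
      replace (- / ww G v 0 * (- ww G v 0 * d) + 0) with d by (field; lra).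
      rewrite (Rsum_ext (fun i => ww G v i * ww G v i / (W * W) * o i (ww G v i / (ww G v 0 * W) * (- ww G v 0 * d) + 0))
                        (fun i => - ww G v i * - ww G v i * (/ (W * W) * o i (/ W * (- ww G v i * d) + 0)))).
      rewrite (Rsum_ext (fun i => IZR (Sl3 G v i N) * IZR (Sl3 G v i N) * (/ (W * W) * o i (/ W * (IZR (Sl3 G v i N) * d) + 0)))
                        (fun i => - ww G v i * - ww G v i * (/ (W * W) * o i (/ W * (- ww G v i * d) + 0))))
        by (intros; rewrite !Sl3_N; auto).
      field. lra.
      intros i _. replace (ww G v i / (ww G v 0 * W) * (- ww G v 0 * d) + 0) with (/ W * (- ww G v i * d) + 0) by (field; lra).
      field. lra.
Qed.


Lemma exists_del G Gam v (bound : nat -> R) : wf_graph G -> subgroup Gam ->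
  (forall e, (e < g_nE G)%nat -> Gam (g_len G e)) ->
  (forall j, (j < kk G v)%nat -> 0 < bound j) ->
  exists del, del_ok G v del /\ (forall j, (j < kk G v)%nat -> del j <= bound j) /\
    (forall j, (j < kk G v)%nat -> Gbar Gam (star_far G v del j)).
Proof.
  intros HW HG HL HB.
  assert (forall j, exists dl, (j < kk G v)%nat -> 0 < dl < g_len G (Lj G v j) /\ dl <= bound j /\
             Gbar Gam (if outb G v j then dl else g_len G (Lj G v j) - dl)) as Hex.
  { intros j. destruct (lt_dec j (kk G v)) as [Hj|Hj]; [|exists 0; intros; lia].
    pose proof (len_pos G v j HW Hj) as Hl. destruct (Lj_props G v j Hj) as [HE _].
    pose proof (HL _ HE) as HGl. set (len := g_len G (Lj G v j)) in *.
    pose proof (HB j Hj). set (m := Rmin (bound j) len).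
    assert (0 < m) by (apply Rmin_pos; lra). assert (m <= bound j) by apply Rmin_l. assert (m <= len) by apply Rmin_r.
    destruct (outb G v j).
    - destruct (density Gam len HG HGl Hl 0 m H0) as [y [Hy Hg]]. exists y. intros _. split; [lra|]. split; [lra|auto].
    - destruct (density Gam len HG HGl Hl (len - m) len ltac:(lra)) as [y [Hy Hg]]. exists (len - y). intros _.
      split; [lra|]. split; [lra|]. replace (len - (len - y)) with y by ring. auto. }
  destruct (choice _ Hex) as [del Hdel]. exists del. split; [|split].
  - intros j Hj. apply Hdel; auto.
  - intros j Hj. apply Hdel; auto.
  - intros j Hj. unfold star_far. apply Hdel; auto.
Qed.

Lemma star_good G Gam v del n Sl : wf_graph G -> subgroup Gam ->
  (forall e, (e < g_nE G)%nat -> Gam (g_len G e)) -> (v < g_nV G)%nat -> del_ok G v del ->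
  (forall j, (j < kk G v)%nat -> Gbar Gam (star_far G v del j)) ->
  (~ g_bnd G v -> balanced G v Sl n) ->
  good_chart G Gam (PV v) (star_U G v del) n (star_h G v del Sl).
Proof.
  intros HW HG HL Hv HD HR HB. split; [|split; [|split]].
  - apply star_is_subgraph; auto.
  - apply star_nbhd; auto.
  - apply star_rational; auto.
  - apply star_trop; auto.
Qed.

Lemma Sl2_balanced G v : kk G v = 2%nat -> balanced G v (Sl2 G v) 1.
Proof.
  intros Hk i Hi. rewrite Hk. simpl. rewrite (Sl2_0 G v i), (Sl2_1 G v i). unfold ww. ring.
Qed.

Lemma vertex_chart G Gam p q v : wf_graph G -> subgroup Gam ->
  (forall e, (e < g_nE G)%nat -> Gam (g_len G e)) -> (v < g_nV G)%nat -> ~ interior_leaf G (PV v) ->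
  exists U n h, good_chart G Gam (PV v) U n h /\
    forall omega, is_form G p q omega -> exists eta, lagerberg n p q eta /\ pullback_eq G U n p q eta h omega.
Proof.
  intros HW HG HL Hv Hnl.
  destruct (exists_del G Gam v (fun _ => 1) HW HG HL ltac:(intros; lra)) as [del [HD [_ HR]]].
  exists (star_U G v del).
  destruct (classic (g_bnd G v)) as [Hb|Hb].
  - exists (kk G v), (star_h G v del Sl_id). split.
    + apply star_good; auto. tauto.
    + intros omega HF. destruct (eta_bnd G p q omega v HW Hv HF) as [g [Hg1 Hg2]].
      exists g. split; auto. apply star_pullback; auto. 
  - destruct (Nat.lt_ge_cases (kk G v) 3) as [Hk|Hk].
    + assert (kk G v = 0 \/ kk G v = 1 \/ kk G v = 2)%nat as [Ek|[Ek|Ek]] by lia.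
      * exists 0%nat, (star_h G v del Sl_id). split.
        -- apply star_good; auto. intros _ i Hi; lia.
        -- intros omega HF. exists (fun _ _ => TPF 0 0 []). split.
           ++ intros i j _ _. apply smooth_TPF, TPok_nil.
           ++ apply star_pullback; auto; intros j d Hj; rewrite Ek in Hj; lia.
      * exfalso. apply Hnl. exists v. split; auto.
      * exists 1%nat, (star_h G v del (Sl2 G v)). split.
        -- apply star_good; auto; intros _; apply Sl2_balanced; auto.
        -- intros omega HF. destruct (eta_val2 G p q omega v HW Hv HF Hb Ek) as [g [Hg1 Hg2]].
           exists g. split; auto. apply star_pullback; auto. intros j d Hj Hd. apply Hg2; [exact Hj | apply Hd].
    + exists (kk G v - 1)%nat, (star_h G v del (Sl3 G v)). split.
      * apply star_good; auto; intros _; apply Sl3_balanced.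
      * intros omega HF.
        assert (exists g, lagerberg (kk G v - 1) p q g /\
          forall j d, (j < kk G v)%nat -> Pout (kk G v - 1) p q g (Sl3 G v) j d = oo G p q omega v j d) as [g [Hg1 Hg2]].
        { destruct p, q.
          - apply eta_val3_TT; auto.
          - apply eta_val3_mixed; auto.
          - apply eta_val3_mixed; auto.
          - apply eta_val3_FF; auto. }
        exists g. split; auto. apply star_pullback; auto.
Qed.


Lemma leaf_chart G Gam p q v omega : wf_graph G -> subgroup Gam ->
  (forall e, (e < g_nE G)%nat -> Gam (g_len G e)) -> (v < g_nV G)%nat -> ~ g_bnd G v -> valency G v = 1%nat ->
  is_form G p q omega ->
  exists U n h eta, good_chart G Gam (PV v) U n h /\ lagerberg n p q eta /\ pullback_eq G U n p q eta h omega.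
Proof.
  intros HW HG HL Hv Hb Hval HF.
  assert (Hk : kk G v = 1%nat) by exact Hval.
  destruct HF as [HS HFv]. destruct (HFv v Hv) as [_ Hint]. destruct (Hint Hb) as [H1 _].
  destruct (H1 Hval (Lj G v 0) (Lj_in G v 0 ltac:(lia))) as [eps [Heps Hc]].
  destruct (exists_del G Gam v (fun _ => eps) HW HG HL ltac:(intros; lra)) as [del [HD [Hle HR]]].
  exists (star_U G v del), 0%nat, (star_h G v del Sl_id),
    (fun _ _ => TPF 0 (if orb p q then 0 else oo G p q omega v 0 0) []).
  split; [|split].
  - apply star_good; auto. intros _ i Hi; lia.
  - intros i j _ _. apply smooth_TPF, TPok_nil.
  - apply star_pullback; auto. intros j d Hj Hd. rewrite Hk in Hj. assert (j = 0%nat) by lia. subst j.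
    assert (d <= eps) by (pose proof (Hle 0%nat ltac:(lia)); lra).
    specialize (Hc d ltac:(lra)). unfold oo. rewrite Hc.
    unfold Pout. destruct p, q; simpl; rewrite ?TPF_nil; ring.
Qed.

Definition eH G e (a b : R) (bnd : nat -> Prop) : wgraph := {|
  g_nV := 2; g_nE := 1; g_src := fun _ => 0%nat; g_tgt := fun _ => 1%nat;
  g_len := fun _ => b - a; g_wt := fun _ => g_wt G e; g_bnd := bnd |}.
Definition eU0 G e a b bnd : subgraph := {|
  sg := eH G e a b bnd; sg_par := fun _ => e; sg_off := fun _ => a;
  sg_vpt := fun u => if Nat.eqb u 0 then PE e a else PE e b |}.
Definition eU G e a b : subgraph := eU0 G e a b (fun u => sub_bnd G (eU0 G e a b (fun _ => False)) u).

Lemma eU_in_sub_PE G e a b bnd e' y : a <= b -> in_sub G (eU0 G e a b bnd) (PE e' y) -> e' = e /\ a <= y <= b.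
Proof.
  intros Hab [[u [Hu E]]|[e1 [z [He [Hz E]]]]].
  - simpl in E. destruct (Nat.eqb u 0); inversion E; subst; split; auto; lra.
  - simpl in *. symmetry in E. apply tpt_PE_inv in E. destruct E; subst. split; auto. lra.
Qed.

Lemma eU_not_nbhd_a G e a b bnd : (e < g_nE G)%nat -> 0 < a -> a < b -> b < g_len G e ->
  ~ nbhd G (in_sub G (eU0 G e a b bnd)) (PE e a).
Proof.
  intros HE Ha Hab Hb [_ [eps [He H]]]. set (m := Rmin eps a / 2).
  assert (0 < m) by (unfold m; apply Rdiv_lt_0_compat; [apply Rmin_pos|]; lra).
  assert (m < eps) by (unfold m; pose proof (Rmin_l eps a); lra).
  assert (m < a) by (unfold m; pose proof (Rmin_r eps a); lra).
  specialize (H e (a - m) HE ltac:(lra) ltac:(simpl; split; auto; rewrite Rabs_left; lra)).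
  rewrite tpt_int in H by lra. apply eU_in_sub_PE in H; lra.
Qed.

Lemma eU_not_nbhd_b G e a b bnd : (e < g_nE G)%nat -> 0 < a -> a < b -> b < g_len G e ->
  ~ nbhd G (in_sub G (eU0 G e a b bnd)) (PE e b).
Proof.
  intros HE Ha Hab Hb [_ [eps [He H]]]. set (m := Rmin eps (g_len G e - b) / 2).
  assert (0 < m) by (unfold m; apply Rdiv_lt_0_compat; [apply Rmin_pos|]; lra).
  assert (m < eps) by (unfold m; pose proof (Rmin_l eps (g_len G e - b)); lra).
  assert (m < g_len G e - b) by (unfold m; pose proof (Rmin_r eps (g_len G e - b)); lra).
  specialize (H e (b + m) HE ltac:(lra) ltac:(simpl; split; auto; rewrite Rabs_right; lra)).
  rewrite tpt_int in H by lra. apply eU_in_sub_PE in H; lra.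
Qed.

Lemma eU_nbhd G e a b bnd y0 : (e < g_nE G)%nat -> 0 < a -> a < y0 -> y0 < b -> b < g_len G e ->
  nbhd G (in_sub G (eU0 G e a b bnd)) (PE e y0).
Proof.
  intros HE Ha H1 H2 Hb. split.
  - right. exists 0%nat, (y0 - a). simpl. split; [lia|]. split; [lra|].
    replace (a + (y0 - a)) with y0 by ring. rewrite tpt_int; auto; lra.
  - exists (Rmin (y0 - a) (b - y0)). split. apply Rmin_pos; lra.
    intros e' y He' Hy [E Hn]. subst e'. pose proof (Rmin_l (y0 - a) (b - y0)). pose proof (Rmin_r (y0 - a) (b - y0)).
    apply Rabs_def2 in Hn. right. exists 0%nat, (y - a). simpl. split; [lia|]. split; [lra|].
    replace (a + (y - a)) with y by ring. auto.
Qed.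

Lemma edge_chart (G : wgraph) (Gam : R -> Prop) (p q : bool) (e : nat) (y0 : R) : wf_graph G -> subgroup Gam ->
  (forall e, (e < g_nE G)%nat -> Gam (g_len G e)) -> (e < g_nE G)%nat -> (0 < y0 < g_len G e) ->
  exists U n h, good_chart G Gam (PE e y0) U n h /\
    forall omega, is_form G p q omega -> exists eta, lagerberg n p q eta /\ pullback_eq G U n p q eta h omega.
Proof.
  intros HW HG HL HE Hy0.
  pose proof (HL e HE) as HGl. destruct (HW e HE) as [_ [_ [_ [Hl Hwt]]]].
  destruct (density Gam _ HG HGl Hl 0 y0 ltac:(lra)) as [a [Ha HGa]].
  destruct (density Gam _ HG HGl Hl y0 (g_len G e) ltac:(lra)) as [b [Hb HGb]].
  exists (eU G e a b), 1%nat, (fun _ _ y => 1 * y + a).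
  assert (SB : forall u, (u < 2)%nat -> sub_bnd G (eU G e a b) u).
  { intros u Hu. right. simpl. destruct (Nat.eqb u 0).
    apply eU_not_nbhd_a; auto; lra. apply eU_not_nbhd_b; auto; lra. }
  split; [split; [|split; [|split]]|].
  -
    split; [|split; [|split; [|split; [|split; [|split]]]]].
    + intros j Hj. simpl. repeat split; try lia; try lra; auto.
    + intros u Hu. simpl. destruct (Nat.eqb u 0); simpl; repeat split; auto; lra.
    + intros u1 u2 H1 H2 E. simpl in *.
      destruct (Nat.eqb_spec u1 0), (Nat.eqb_spec u2 0); inversion E; try lia; lra.
    + intros j Hj. simpl. repeat split; auto; try lra.
      rewrite tpt_int; auto; lra.
      replace (a + (b - a)) with b by ring. rewrite tpt_int; auto; lra.
    + intros e1 e2 H1 H2 Hne. simpl in *. lia.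
    + intros u j Hu Hj y Hy. simpl in *. rewrite tpt_int by lra.
      destruct (Nat.eqb u 0); intros E; inversion E; lra.
    + intros u Hu. simpl. tauto.
  - apply eU_nbhd; auto; lra.
  - intros u Hu. right. exists e. simpl. destruct (Nat.eqb u 0).
    + exists a. repeat split; auto; try lra. rewrite tpt_int; auto; lra.
    + exists b. repeat split; auto; try lra. rewrite tpt_int; auto; lra.
  - intros i Hi. split; [split; [split|]|].
    + intros j _. apply smooth_lin.
    + intros u Hu. split.
      * intros _ e1 e2 H1 H2. apply incident_In in H1. apply incident_In in H2. simpl in H1, H2.
        assert (e1 = 0%nat) by lia. assert (e2 = 0%nat) by lia. subst; auto.
      * intros Hn. exfalso. apply Hn. apply SB. simpl in Hu. auto.
    + intros j _. exists 1, a. intros; auto.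
    + intros j _. exists 1%Z, a. simpl. split. intros; auto. split.
      replace (a - 1 * a) with 0 by ring. apply HG.
      replace (a + 1 * (g_len G e - a)) with (g_len G e) by ring. auto.
  - intros omega HF. exists (fun _ _ => TPF 1 0 [single 0 (omega e)]). split.
    + intros i j _ _. apply smooth_TPF, TPok_single. destruct HF as [HS _]. apply HS; auto.
    + intros j y Hj Hy. simpl in Hj |- *. unfold pullback.
      assert (Ei : forall bb, idx bb 1 = [0%nat]) by (destruct bb; reflexivity). rewrite !Ei. simpl.
      rewrite TPF_single by lia.
      assert (D1 : Derive (fun y => 1 * y + a) y = 1) by (apply is_derive_unique, is_derive_lin).
      rewrite D1. replace (1 * y + a) with (a + y) by ring. destruct p, q; ring.
Qed.


Theorem proposition4p10 :
  forall (G : wgraph) (Gam : R -> Prop) (p q : bool) (x : point),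
    wf_graph G ->
    subgroup Gam ->
    (forall e, (e < g_nE G)%nat -> Gam (g_len G e)) ->
    valid_pt G x ->
    (forall omega : nat -> R -> R, is_form G p q omega ->
       exists (U : subgraph) (n : nat) (h : nat -> nat -> R -> R)
              (eta : nat -> nat -> (nat -> R) -> R),
         good_chart G Gam x U n h /\ lagerberg n p q eta /\
         pullback_eq G U n p q eta h omega) /\
    (~ interior_leaf G x ->
       exists (U : subgraph) (n : nat) (h : nat -> nat -> R -> R),
         good_chart G Gam x U n h /\
         forall omega : nat -> R -> R, is_form G p q omega ->
           exists eta : nat -> nat -> (nat -> R) -> R,
             lagerberg n p q eta /\ pullback_eq G U n p q eta h omega).
Proof.
  intros G Gam p q x HW HG HL Hx.
  assert (P2 : ~ interior_leaf G x ->
       exists (U : subgraph) (n : nat) (h : nat -> nat -> R -> R),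
         good_chart G Gam x U n h /\
         forall omega : nat -> R -> R, is_form G p q omega ->
           exists eta : nat -> nat -> (nat -> R) -> R,
             lagerberg n p q eta /\ pullback_eq G U n p q eta h omega).
  { intros Hnl. destruct x as [v|e y].
    - apply vertex_chart; auto.
    - destruct Hx as [HE Hy]. apply edge_chart; auto. }
  split; [|exact P2].
  intros omega HF. destruct (classic (interior_leaf G x)) as [Hl|Hl].
  - destruct Hl as [v [-> [Hb Hval]]]. apply leaf_chart; auto.
  - destruct (P2 Hl) as [U [n [h [Hg Hall]]]]. destruct (Hall omega HF) as [eta [H1 H2]].
    exists U, n, h, eta. auto.
Qed.
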